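(* Let $\mathsf V$ be a pseudovariety of semigroupoids. The following are equivalent: (1) $\mathsf V$ is concatenation-closed; (2) for every finite-vertex graph $A$, the set of $\mathsf V$-recognizable languages over $A$ is closed under concatenation; (3) $\mathsf V\supseteq\mathsf N$ and the multiplication in $\overline{\Omega}_A\mathsf V$ is open for every finite-vertex graph $A$; (4) $\mathsf V\supseteq\mathsf N$ and the multiplication in $\overline{\Omega}_A\mathsf V$ is open for every finite graph $A$.
   Context: A graph $G$ is a set partitioned into vertices $V(G)$ and edges $E(G)$, with source and range maps $\alpha,\omega\colon E(G)\to V(G)$; it is finite-vertex if $V(G)$ is finite. A semigroupoid is a graph $S$ with a partial associative multiplication defined exactly on $D(S)=\{(s,t)\in E(S)^2:\alpha(s)=\omega(t)\}$, with $\alpha(st)=\alpha(t)$, $\omega(st)=\omega(s)$. A pseudovariety of semigroupoids is a class of finite semigroupoids closed under divisors, finite direct products and finite coproducts; $\mathsf N$ is the pseudovariety of finite nilpotent semigroups. $\overline{\Omega}_A\mathsf V$ is the free pro-$\mathsf V$ semigroupoid over the finite-vertex graph $A$. $A^+$ is the free semigroupoid of nonempty paths over $A$. A language $L\subseteq E(A^+)$ is $\mathsf V$-recognizable if $L=\varphi^{-1}(\varphi(L))$ for some homomorphism $\varphi\colon A^+\to F$, $F\in\mathsf V$; concatenation $LK=\{uv: u\in L, v\in K, (u,v)\in D(A^+)\}$. $\mathsf V$ is concatenation-closed if for every finite graph $A$ the $\mathsf V$-recognizable languages over $A$ are closed under concatenation. Multiplication is open if the map $D(S)\to E(S)$ maps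 open sets to open sets. *)

(* Defs.v *)
From Stdlib Require Import List.
Import ListNotations.

Record graph := Graph {
  gV : Type; gE : Type;
  gsrc : gE -> gV;
  gtgt : gE -> gV
}.

Definition finite_vertex_graph (A : graph) : Prop :=
  exists l : list (gV A), forall x, In x l.

Definition finite_graph (A : graph) : Prop :=
  finite_vertex_graph A /\ exists l : list (gE A), forall e, In e l.

(* Raw semigroupoid data: the product [smul s t h] is defined exactly on
   D(S) = {(s,t) | alpha s = omega t}, witnessed by h. *)
Record sgd := Sgd {
  sV : Type; sE : Type;
  ssrc : sE -> sV;
  stgt : sE -> sV;
  smul : forall s t : sE, ssrc s = stgt t -> sE
}.

Definition is_sgd (S : sgd) : Prop :=
  (forall s t h, ssrc S (smul S s t h) = ssrc S t) /\
  (forall s t h, stgt S (smul S s t h) = stgt S s) /\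
  (forall s t h h', smul S s t h = smul S s t h') /\
  (forall s t r h1 h2 h3 h4,
      smul S (smul S s t h1) r h3 = smul S s (smul S t r h2) h4).

Definition finite_sgd (S : sgd) : Prop :=
  (exists l : list (sV S), forall x, In x l) /\
  (exists l : list (sE S), forall e, In e l).

Record hom (S T : sgd) := Hom { hv : sV S -> sV T; he : sE S -> sE T }.
Arguments hv {S T}. Arguments he {S T}.

Definition is_hom {S T : sgd} (f : hom S T) : Prop :=
  (forall e, ssrc T (he f e) = hv f (ssrc S e)) /\
  (forall e, stgt T (he f e) = hv f (stgt S e)) /\
  (forall s t h h', he f (smul S s t h) = smul T (he f s) (he f t) h').

Definition faithful {S T : sgd} (f : hom S T) : Prop :=
  forall e e', ssrc S e = ssrc S e' -> stgt S e = stgt S e' ->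
    he f e = he f e' -> e = e'.

Definition quotient_hom {S T : sgd} (g : hom S T) : Prop :=
  (forall x y, hv g x = hv g y -> x = y) /\
  (forall y, exists x, hv g x = y) /\
  (forall e, exists d, he g d = e).

Definition onto {S T : sgd} (f : hom S T) : Prop :=
  (forall y, exists x, hv f x = y) /\ (forall e, exists d, he f d = e).

Definition divides (S T : sgd) : Prop :=
  exists (U : sgd) (f : hom U T) (g : hom U S),
    is_sgd U /\ is_hom f /\ is_hom g /\ faithful f /\ quotient_hom g.

Definition prod_sgd (S T : sgd) : sgd :=
  Sgd (sV S * sV T) (sE S * sE T)
    (fun p => (ssrc S (fst p), ssrc T (snd p)))
    (fun p => (stgt S (fst p), stgt T (snd p)))
    (fun p q h => (smul S (fst p) (fst q) (f_equal fst h),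
                   smul T (snd p) (snd q) (f_equal snd h))).

Definition csrc (S T : sgd) (x : sE S + sE T) : sV S + sV T :=
  match x with inl s => inl (ssrc S s) | inr t => inr (ssrc T t) end.
Definition ctgt (S T : sgd) (x : sE S + sE T) : sV S + sV T :=
  match x with inl s => inl (stgt S s) | inr t => inr (stgt T t) end.

Lemma inl_inj' {X Y : Type} (a a' : X) : @inl X Y a = inl a' -> a = a'.
Proof. intro h; injection h; auto. Qed.
Lemma inr_inj' {X Y : Type} (a a' : Y) : @inr X Y a = inr a' -> a = a'.
Proof. intro h; injection h; auto. Qed.

Definition cmul (S T : sgd) (x y : sE S + sE T) :
  csrc S T x = ctgt S T y -> sE S + sE T :=
  match x as x0, y as y0 return csrc S T x0 = ctgt S T y0 -> sE S + sE T with
  | inl s, inl t => fun h => inl (smul S s t (inl_inj' _ _ h))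
  | inr s, inr t => fun h => inr (smul T s t (inr_inj' _ _ h))
  | inl s, inr _ => fun _ => inl s
  | inr s, inl _ => fun _ => inr s
  end.

Definition coprod_sgd (S T : sgd) : sgd :=
  Sgd (sV S + sV T) (sE S + sE T) (csrc S T) (ctgt S T) (cmul S T).

(* Empty product: the trivial semigroupoid; empty coproduct: the empty one. *)
Definition trivial_sgd : sgd :=
  Sgd unit unit (fun _ => tt) (fun _ => tt) (fun _ _ _ => tt).
Definition empty_sgd : sgd :=
  Sgd Empty_set Empty_set (fun x => x) (fun x => x) (fun s _ _ => s).

Definition pseudovariety (V : sgd -> Prop) : Prop :=
  (forall S, V S -> is_sgd S /\ finite_sgd S) /\
  (forall S T, V T -> is_sgd S -> finite_sgd S -> divides S T -> V S) /\
  V trivial_sgd /\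
  (forall S T, V S -> V T -> V (prod_sgd S T)) /\
  V empty_sgd /\
  (forall S T, V S -> V T -> V (coprod_sgd S T)).

Inductive is_prod (X : sgd) (f : nat -> sE X) : nat -> sE X -> Prop :=
| is_prod0 : is_prod X f 0 (f 0)
| is_prodS n w (h : ssrc X w = stgt X (f (S n))) :
    is_prod X f n w -> is_prod X f (S n) (smul X w (f (S n)) h).

Definition one_vertex (S : sgd) : Prop := exists x : sV S, forall y, y = x.

(* S^(n+1) = {z}: every product of n+1 elements equals the zero z *)
Definition nilpotent (S : sgd) : Prop :=
  exists (z : sE S) (n : nat), forall f w, is_prod S f n w -> w = z.

Definition containsN (V : sgd -> Prop) : Prop :=
  forall S, is_sgd S -> finite_sgd S -> one_vertex S -> nilpotent S -> V S.

(* (e, [f1; ...; fk]) represents the path e f1 ... fk (alpha e = omega f1, ...) *)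
Fixpoint is_path (A : graph) (e : gE A) (p : list (gE A)) : Prop :=
  match p with
  | [] => True
  | f :: q => gsrc A e = gtgt A f /\ is_path A f q
  end.

Fixpoint plast (A : graph) (e : gE A) (p : list (gE A)) : gE A :=
  match p with [] => e | f :: q => plast A f q end.

Lemma is_path_app (A : graph) (e : gE A) p f q :
  is_path A e p -> gsrc A (plast A e p) = gtgt A f -> is_path A f q ->
  is_path A e (p ++ f :: q).
Proof.
  revert e; induction p as [|g p IH]; simpl; intros e H1 H2 H3.
  - split; assumption.
  - destruct H1 as [H1 H1']. split; [assumption|]. apply IH; assumption.
Qed.

Definition pathE (A : graph) : Type :=
  { ep : gE A * list (gE A) | is_path A (fst ep) (snd ep) }.

Definition psrc (A : graph) (x : pathE A) : gV A :=
  gsrc A (plast A (fst (proj1_sig x)) (snd (proj1_sig x))).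
Definition ptgt (A : graph) (x : pathE A) : gV A :=
  gtgt A (fst (proj1_sig x)).

Definition pmul (A : graph) (x y : pathE A) (h : psrc A x = ptgt A y) : pathE A :=
  exist _ (fst (proj1_sig x), snd (proj1_sig x) ++ fst (proj1_sig y) :: snd (proj1_sig y))
    (is_path_app A _ _ _ _ (proj2_sig x) h (proj2_sig y)).

Definition Aplus (A : graph) : sgd := Sgd (gV A) (pathE A) (psrc A) (ptgt A) (pmul A).

Definition lang (A : graph) := sE (Aplus A) -> Prop.

Definition recognizable (V : sgd -> Prop) (A : graph) (L : lang A) : Prop :=
  exists (F : sgd) (phi : hom (Aplus A) F), V F /\ is_hom phi /\
    forall u, L u <-> exists v, L v /\ he phi v = he phi u.

Definition concat (A : graph) (L K : lang A) : lang A :=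
  fun w => exists u v (h : ssrc (Aplus A) u = stgt (Aplus A) v),
    L u /\ K v /\ w = smul (Aplus A) u v h.

Definition recog_concat_closed (V : sgd -> Prop) (A : graph) : Prop :=
  forall L K, recognizable V A L -> recognizable V A K ->
    recognizable V A (concat A L K).

Definition concatenation_closed (V : sgd -> Prop) : Prop :=
  forall A, finite_graph A -> recog_concat_closed V A.

(** * The free pro-V semigroupoid over A, as the inverse limit of the
    A-generated members of V (onto morphisms A^+ -> F, F in V). *)

Definition fidx (V : sgd -> Prop) (A : graph) : Type :=
  { F : sgd & { phi : hom (Aplus A) F | V F /\ is_hom phi /\ onto phi } }.

Definition fmap {V A} (i : fidx V A) : hom (Aplus A) (projT1 i) :=
  proj1_sig (projT2 i).

(* Candidate edges: families indexed by the inverse system. *)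
Definition family (V : sgd -> Prop) (A : graph) : Type :=
  forall i : fidx V A, sE (projT1 i).

(* Edges of the inverse limit: compatible families. *)
Definition compat {V A} (u : family V A) : Prop :=
  forall (i j : fidx V A) (th : hom (projT1 i) (projT1 j)), is_hom th ->
    (forall x, hv th (hv (fmap i) x) = hv (fmap j) x) ->
    (forall p, he th (he (fmap i) p) = he (fmap j) p) ->
    he th (u i) = u j.

(* alpha u = omega v in the limit (vertex families computed pointwise) *)
Definition composable {V A} (u v : family V A) : Prop :=
  forall i, ssrc (projT1 i) (u i) = stgt (projT1 i) (v i).

(* Open subsets of E(limit): initial topology of the projections onto the
   discrete finite semigroupoids. *)
Definition openE {V A} (W : family V A -> Prop) : Prop :=
  forall w, compat w -> W w ->
    exists Lw : list (fidx V A), forall w', compat w' ->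
      (forall i, In i Lw -> w' i = w i) -> W w'.

(* Open subsets of D(limit), with the subspace topology of E x E. *)
Definition openD {V A} (U : family V A -> family V A -> Prop) : Prop :=
  forall u v, compat u -> compat v -> composable u v -> U u v ->
    exists Lw : list (fidx V A), forall u' v', compat u' -> compat v' ->
      composable u' v' ->
      (forall i, In i Lw -> u' i = u i /\ v' i = v i) -> U u' v'.

Definition mul_image {V A} (U : family V A -> family V A -> Prop) :
  family V A -> Prop :=
  fun w => compat w /\ exists u v (hc : composable u v),
    compat u /\ compat v /\ U u v /\
    forall i, w i = smul (projT1 i) (u i) (v i) (hc i).

Definition multiplication_open (V : sgd -> Prop) (A : graph) : Prop :=
  forall U : family V A -> family V A -> Prop, openD U -> openE (mul_image U).

(* Main.v *)
Require Import Defs.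
From Stdlib Require Import List ProofIrrelevance Classical ClassicalEpsilon
  FunctionalExtensionality PropExtensionality Lia Arith.
From mathcomp Require ssreflect ssrbool eqtype ssrnat classical_sets boolp filter.
Import ListNotations.


Lemma smul_pi (S : sgd) : is_sgd S -> forall s t h h', smul S s t h = smul S s t h'.
Proof. intros [_ [_ [H _]]]; apply H. Qed.

Lemma smul_congr (S : sgd) : is_sgd S -> forall s s' t t' h h',
  s = s' -> t = t' -> smul S s t h = smul S s' t' h'.
Proof. intros HS s s' t t' h h' e1 e2; subst; apply smul_pi; auto. Qed.

Lemma smul_src (S : sgd) : is_sgd S -> forall s t h, ssrc S (smul S s t h) = ssrc S t.
Proof. intros [H _]; apply H. Qed.
Lemma smul_tgt (S : sgd) : is_sgd S -> forall s t h, stgt S (smul S s t h) = stgt S s.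
Proof. intros [_ [H _]]; apply H. Qed.
Lemma smul_assoc (S : sgd) : is_sgd S -> forall s t r h1 h2 h3 h4,
      smul S (smul S s t h1) r h3 = smul S s (smul S t r h2) h4.
Proof. intros [_ [_ [_ H]]]; apply H. Qed.

Lemma hom_src {S T} (f : hom S T) : is_hom f -> forall e, ssrc T (he f e) = hv f (ssrc S e).
Proof. intros [H _]; apply H. Qed.
Lemma hom_tgt {S T} (f : hom S T) : is_hom f -> forall e, stgt T (he f e) = hv f (stgt S e).
Proof. intros [_ [H _]]; apply H. Qed.
Lemma hom_mul_proof {S T} (f : hom S T) : is_hom f -> forall s t,
  ssrc S s = stgt S t -> ssrc T (he f s) = stgt T (he f t).
Proof. intros Hf s t h. rewrite (hom_src f Hf), (hom_tgt f Hf), h. reflexivity. Qed.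
Lemma hom_mul {S T} (f : hom S T) : is_hom f -> forall s t h h',
  he f (smul S s t h) = smul T (he f s) (he f t) h'.
Proof. intros [_ [_ H]]; apply H. Qed.

Definition hcomp {S T R : sgd} (g : hom T R) (f : hom S T) : hom S R :=
  Hom S R (fun x => hv g (hv f x)) (fun e => he g (he f e)).

Lemma hcomp_hom {S T R : sgd} (g : hom T R) (f : hom S T) :
  is_hom f -> is_hom g -> is_hom (hcomp g f).
Proof.
  intros Hf Hg. split; [|split]; simpl.
  - intro e. rewrite (hom_src g Hg), (hom_src f Hf). reflexivity.
  - intro e. rewrite (hom_tgt g Hg), (hom_tgt f Hf). reflexivity.
  - intros s t h h'.
    rewrite (hom_mul f Hf s t h (hom_mul_proof f Hf s t h)).
    apply (hom_mul g Hg).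
Qed.

Definition hpair {S T R : sgd} (f : hom S T) (g : hom S R) : hom S (prod_sgd T R) :=
  Hom S (prod_sgd T R) (fun x => (hv f x, hv g x)) (fun e => (he f e, he g e)).

Lemma hpair_hom {S T R : sgd} (f : hom S T) (g : hom S R) :
  is_hom f -> is_hom g -> is_hom (hpair f g).
Proof.
  intros Hf Hg. split; [|split]; simpl.
  - intro e. rewrite (hom_src g Hg), (hom_src f Hf). reflexivity.
  - intro e. rewrite (hom_tgt g Hg), (hom_tgt f Hf). reflexivity.
  - intros s t h h'. f_equal; [apply (hom_mul f Hf)|apply (hom_mul g Hg)].
Qed.

Definition htriv (S : sgd) : hom S trivial_sgd := Hom S trivial_sgd (fun _ => tt) (fun _ => tt).
Lemma htriv_hom S : is_hom (htriv S).
Proof. split; [|split]; simpl; intros; reflexivity. Qed.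

Definition hfst (S T : sgd) : hom (prod_sgd S T) S := Hom (prod_sgd S T) S (fun x : sV S * sV T => fst x) (fun e : sE S * sE T => fst e).
Definition hsnd (S T : sgd) : hom (prod_sgd S T) T := Hom (prod_sgd S T) T (fun x : sV S * sV T => snd x) (fun e : sE S * sE T => snd e).
Lemma hfst_hom S T : is_hom (hfst S T).
Proof. split; [|split]; simpl; intros; try reflexivity. apply f_equal. apply proof_irrelevance. Qed.

Lemma prod_is_sgd S T : is_sgd S -> is_sgd T -> is_sgd (prod_sgd S T).
Proof.
  intros HS HT. split; [|split; [|split]]; simpl.
  - intros [s1 s2] [t1 t2] h; simpl. f_equal; apply smul_src; auto.
  - intros [s1 s2] [t1 t2] h; simpl. f_equal; apply smul_tgt; auto.
  - intros s t h h'. f_equal; apply smul_pi; auto.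
  - intros s t r h1 h2 h3 h4. f_equal; simpl.
    + apply smul_assoc; auto.
    + apply smul_assoc; auto.
Qed.

Lemma list_prod_cover {X Y : Type} (l1 : list X) (l2 : list Y) :
  (forall x, In x l1) -> (forall y, In y l2) -> forall p, In p (list_prod l1 l2).
Proof. intros H1 H2 [x y]. apply in_prod; auto. Qed.

Lemma prod_finite S T : finite_sgd S -> finite_sgd T -> finite_sgd (prod_sgd S T).
Proof.
  intros [[v1 H1] [e1 H1']] [[v2 H2] [e2 H2']]. split.
  - exists (list_prod v1 v2). apply list_prod_cover; auto.
  - exists (list_prod e1 e2). apply list_prod_cover; auto.
Qed.

Lemma triv_is_sgd : is_sgd trivial_sgd.
Proof. split; [|split; [|split]]; simpl; intros; try destruct (smul _ _ _ _); reflexivity. Qed.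

Lemma sig_list {X : Type} (P : X -> Prop) (l : list X) :
  (forall x, P x -> In x l) -> exists ls : list (sig P), forall s, In s ls.
Proof.
  revert P. induction l as [|a l IH]; intros P H.
  - exists []. intros [x Hx]. destruct (H x Hx).
  - destruct (classic (P a)) as [Pa|nPa].
    + destruct (IH (fun x => P x /\ x <> a)) as [ls Hls].
      { intros x [Px nx]. destruct (H x Px); [congruence|auto]. }
      exists (exist P a Pa :: map (fun s => exist P (proj1_sig s) (proj1 (proj2_sig s))) ls).
      intros [x Hx]. destruct (classic (x = a)) as [->|nxa].
      * left. f_equal. apply proof_irrelevance.
      * right. apply in_map_iff. exists (exist _ x (conj Hx nxa)). split; auto.
        simpl. f_equal. apply proof_irrelevance.
    + apply IH. intros x Px. destruct (H x Px); [subst; contradiction|auto].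
Qed.

Section Paths.
Variable A : graph.

Lemma path_ext (x y : pathE A) : proj1_sig x = proj1_sig y -> x = y.
Proof. destruct x, y; simpl; intros; subst; f_equal; apply proof_irrelevance. Qed.

Lemma plast_app e p f q : plast A e (p ++ f :: q) = plast A f q.
Proof. revert e; induction p; simpl; auto. Qed.

Lemma Aplus_sgd : is_sgd (Aplus A).
Proof.
  split; [|split; [|split]]; simpl.
  - intros s t h. unfold psrc, pmul; simpl. rewrite plast_app. reflexivity.
  - intros; reflexivity.
  - intros; apply path_ext; reflexivity.
  - intros; apply path_ext; simpl. rewrite <- app_assoc. reflexivity.
Qed.

Definition word (x : pathE A) : list (gE A) := fst (proj1_sig x) :: snd (proj1_sig x).

Lemma word_inj x y : word x = word y -> x = y.
Proof.
  intro H; apply path_ext. destruct x as [[e p] hx], y as [[f q] hy]; unfold word in H; simpl in *.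
  injection H; intros; subst; reflexivity.
Qed.

Lemma word_mul x y h : word (pmul A x y h) = word x ++ word y.
Proof. reflexivity. Qed.
End Paths.


Definition ultra {X : Type} (G : (X -> Prop) -> Prop) : Prop :=
  (forall P Q : X -> Prop, G P -> (forall x, P x -> Q x) -> G Q) /\
  (forall P Q : X -> Prop, G P -> G Q -> G (fun x => P x /\ Q x)) /\
  (~ G (fun _ => False)) /\
  (forall P : X -> Prop, G P \/ G (fun x => ~ P x)).

Section UltraEx.
Import ssreflect ssrbool eqtype ssrnat classical_sets boolp filter.

Lemma ultra_ext {X : Type} (B : (X -> Prop) -> Prop) :
  (exists b, B b) ->
  (forall b1 b2, B b1 -> B b2 -> exists b3, B b3 /\ forall x, b3 x -> b1 x /\ b2 x) ->
  (forall b, B b -> exists x, b x) ->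
  exists G : (X -> Prop) -> Prop, ultra G /\ forall b, B b -> G b.
Proof.
  move=> [b0 Hb0] Hdir Hne.
  pose F := fun P : set X => exists b, B b /\ (forall x, b x -> P x).
  have PF : ProperFilter F.
  { split.
    - move=> [b [Hb H]]. have [x bx] := Hne b Hb. exact: (H x bx).
    - split.
      + exists b0; split => //.
      + move=> P Q [b1 [Hb1 H1]] [b2 [Hb2 H2]].
        have [b3 [Hb3 H3]] := Hdir b1 b2 Hb1 Hb2.
        exists b3; split => // x bx. have [u v] := H3 x bx. split; [exact: H1|exact: H2].
      + move=> P Q PQ [b [Hb H]]. exists b; split => // x bx. exact: PQ (H x bx). }
  have [G [UG FG]] := ultraFilterLemma PF.
  exists G; split; last first.
  { move=> b Hb. apply: FG. exists b; split => //. }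
  split; [|split; [|split]].
  - move=> P Q GP PQ. exact: (filterS PQ GP).
  - move=> P Q GP GQ. exact: (filterI GP GQ).
  - move=> H. apply: (@filter_not_empty _ G). exact: H.
  - move=> P. have [h|h] := in_ultra_setVsetC P UG; [left|right] => //.
Qed.
End UltraEx.



Section PV.
Variable V : sgd -> Prop.
Hypothesis HV : pseudovariety V.

Lemma V_sgd S : V S -> is_sgd S.
Proof. destruct HV as [H _]. intro h; apply (H S h). Qed.
Lemma V_fin S : V S -> finite_sgd S.
Proof. destruct HV as [H _]. intro h; apply (H S h). Qed.
Lemma V_div S T : V T -> is_sgd S -> finite_sgd S -> divides S T -> V S.
Proof. destruct HV as [_ [H _]]. apply H. Qed.
Lemma V_triv : V trivial_sgd.
Proof. apply HV. Qed.
Lemma V_prod S T : V S -> V T -> V (prod_sgd S T).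
Proof. apply HV. Qed.

Definition hid (S : sgd) : hom S S := Hom S S (fun x => x) (fun e => e).
Lemma hid_hom S : is_hom (hid S).
Proof. split; [|split]; simpl; intros; try reflexivity. f_equal; apply proof_irrelevance. Qed.

Section Lang.
Variable A : graph.

Definition sat {F} (phi : hom (Aplus A) F) (L : lang A) :=
  forall u v, he phi u = he phi v -> L u -> L v.

Lemma rec_of_sat F (phi : hom (Aplus A) F) L : V F -> is_hom phi -> sat phi L ->
  recognizable V A L.
Proof.
  intros HF Hp Hs. exists F, phi. split; [auto|split; [auto|]].
  intro u; split.
  - intro Lu; exists u; auto.
  - intros [v [Lv e]]. apply (Hs v u e Lv).
Qed.

Lemma sat_of_rec L : recognizable V A L ->
  exists F (phi : hom (Aplus A) F), V F /\ is_hom phi /\ sat phi L.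
Proof.
  intros [F [phi [HF [Hp H]]]]. exists F, phi. split; [auto|split; [auto|]].
  intros u v e Lu. apply H. exists u. auto.
Qed.

Definition kle {F G} (phi : hom (Aplus A) F) (psi : hom (Aplus A) G) :=
  forall u v, he phi u = he phi v -> he psi u = he psi v.

Lemma sat_kle {F G} (phi : hom (Aplus A) F) (psi : hom (Aplus A) G) L :
  kle phi psi -> sat psi L -> sat phi L.
Proof. intros Hk Hs u v e. apply Hs. apply Hk; auto. Qed.

Lemma kle_pair_l {F G} (phi : hom (Aplus A) F) (psi : hom (Aplus A) G) :
  kle (hpair phi psi) phi.
Proof. intros u v e. simpl in e. injection e; auto. Qed.
Lemma kle_pair_r {F G} (phi : hom (Aplus A) F) (psi : hom (Aplus A) G) :
  kle (hpair phi psi) psi.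
Proof. intros u v e. simpl in e. injection e; auto. Qed.

Lemma rec_multi (Ls : list (lang A)) : (forall L, In L Ls -> recognizable V A L) ->
  exists F (phi : hom (Aplus A) F), V F /\ is_hom phi /\ forall L, In L Ls -> sat phi L.
Proof.
  induction Ls as [|L Ls IH]; intro H.
  - exists trivial_sgd, (htriv _). split; [apply V_triv|split; [apply htriv_hom|]].
    intros L [].
  - destruct IH as [F [phi [HF [Hp Hs]]]]. { intros; apply H; right; auto. }
    destruct (sat_of_rec L) as [G [psi [HG [Hq Hs']]]]. { apply H; left; auto. }
    exists (prod_sgd G F), (hpair psi phi). split; [apply V_prod; auto|split; [apply hpair_hom; auto|]].
    intros K [<-|HK].
    + eapply sat_kle; [apply (@kle_pair_l _ _)|]; auto.
    + eapply sat_kle; [apply (@kle_pair_r _ _)|]; auto.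
Qed.

Lemma rec_compl L : recognizable V A L -> recognizable V A (fun x => ~ L x).
Proof.
  intro H; destruct (sat_of_rec L H) as [F [phi [HF [Hp Hs]]]].
  apply (rec_of_sat F phi); auto. intros u v e nu Lv. apply nu. apply (Hs v u); auto.
Qed.

Lemma rec_inter L K : recognizable V A L -> recognizable V A K ->
  recognizable V A (fun x => L x /\ K x).
Proof.
  intros HL HK. destruct (rec_multi [L; K]) as [F [phi [HF [Hp Hs]]]].
  { intros M [<-|[<-|[]]]; auto. }
  apply (rec_of_sat F phi); auto. intros u v e [Lu Ku]. split.
  - apply (Hs L (or_introl eq_refl) u v e Lu).
  - apply (Hs K (or_intror (or_introl eq_refl)) u v e Ku).
Qed.

Lemma rec_full : recognizable V A (fun _ => True).
Proof. apply (rec_of_sat _ (htriv _)); [apply V_triv|apply htriv_hom|]. intros u v _ _; exact I. Qed.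

Lemma rec_ext L K : (forall x, L x <-> K x) -> recognizable V A L -> recognizable V A K.
Proof.
  intros E H. destruct (sat_of_rec L H) as [F [phi [HF [Hp Hs]]]].
  apply (rec_of_sat F phi); auto. intros u v e Ku. apply E. apply (Hs u v e). apply E; auto.
Qed.

Lemma fidx_V (i : fidx V A) : V (projT1 i).
Proof. apply (proj2_sig (projT2 i)). Qed.
Lemma fidx_hom (i : fidx V A) : is_hom (fmap i).
Proof. apply (proj2_sig (projT2 i)). Qed.
Lemma fidx_onto (i : fidx V A) : onto (fmap i).
Proof. apply (proj2_sig (projT2 i)). Qed.

Lemma prodrec (T : list (fidx V A)) :
  exists F (phi : hom (Aplus A) F), V F /\ is_hom phi /\
    forall i, In i T -> kle phi (fmap i).
Proof.
  induction T as [|i T IH].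
  - exists trivial_sgd, (htriv _). split; [apply V_triv|split; [apply htriv_hom|]].
    intros i [].
  - destruct IH as [F [phi [HF [Hp Hs]]]].
    exists (prod_sgd (projT1 i) F), (hpair (fmap i) phi).
    split; [apply V_prod; auto; apply fidx_V|split; [apply hpair_hom; auto; apply fidx_hom|]].
    intros j [<-|Hj].
    + apply (@kle_pair_l _ _).
    + intros u v e. apply (Hs j Hj). apply (@kle_pair_r _ _ (fmap i) phi); auto.
Qed.

Definition GA : sgd := Sgd (gV A) (gV A * gV A) (fun p => snd p) (fun p => fst p)
  (fun p q _ => (fst p, snd q)).

Lemma GA_sgd : is_sgd GA.
Proof. split; [|split; [|split]]; simpl; intros; reflexivity. Qed.

Hypothesis Afv : finite_vertex_graph A.

Lemma GA_fin : finite_sgd GA.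
Proof.
  destruct Afv as [l Hl]. split.
  - exists l; auto.
  - exists (list_prod l l). apply list_prod_cover; auto.
Qed.

Lemma GA_V : V GA.
Proof.
  apply (V_div GA trivial_sgd V_triv GA_sgd GA_fin).
  exists GA, (htriv GA), (hid GA). split; [apply GA_sgd|split; [apply htriv_hom|split; [apply hid_hom|split]]].
  - intros [a b] [c d] e1 e2 _; simpl in *; subst; reflexivity.
  - split; [|split]; simpl; eauto.
Qed.

Definition hGA : hom (Aplus A) GA :=
  Hom (Aplus A) GA (fun x => x) (fun p => (ptgt A p, psrc A p)).

Lemma hGA_hom : is_hom hGA.
Proof.
  split; [|split]; simpl; intros; try reflexivity.
  f_equal. apply (smul_src _ (Aplus_sgd A)).
Qed.

Section Img.
Variable T : sgd.
Hypothesis HT : V T.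
Variable psi : hom (Aplus A) T.
Hypothesis Hpsi : is_hom psi.
Hypothesis Hinj : forall x y, hv psi x = hv psi y -> x = y.

Definition IV := {t : sV T | exists x, hv psi x = t}.
Definition IE := {e : sE T | exists d, he psi d = e}.

Lemma isrc_pf (e : IE) : exists x, hv psi x = ssrc T (proj1_sig e).
Proof. destruct e as [e [d <-]]. exists (psrc A d). simpl. rewrite (hom_src _ Hpsi). reflexivity. Qed.
Lemma itgt_pf (e : IE) : exists x, hv psi x = stgt T (proj1_sig e).
Proof. destruct e as [e [d <-]]. exists (ptgt A d). simpl. rewrite (hom_tgt _ Hpsi). reflexivity. Qed.

Definition isrc (e : IE) : IV := exist _ _ (isrc_pf e).
Definition itgt (e : IE) : IV := exist _ _ (itgt_pf e).

Lemma imul_pf (e1 e2 : IE) (h : ssrc T (proj1_sig e1) = stgt T (proj1_sig e2)) :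
  exists d, he psi d = smul T (proj1_sig e1) (proj1_sig e2) h.
Proof.
  destruct e1 as [e1 [d1 E1]], e2 as [e2 [d2 E2]]; simpl in *.
  assert (hd : psrc A d1 = ptgt A d2).
  { apply Hinj. change (psrc A d1) with (ssrc (Aplus A) d1). change (ptgt A d2) with (stgt (Aplus A) d2).
    rewrite <- (hom_src _ Hpsi), <- (hom_tgt _ Hpsi). rewrite E1, E2. exact h. }
  exists (pmul A d1 d2 hd).
  etransitivity; [apply (hom_mul psi Hpsi (d1 : sE (Aplus A)) d2 hd (hom_mul_proof _ Hpsi _ _ hd))|].
  apply smul_congr; auto. apply V_sgd; auto.
Qed.

Definition imul (e1 e2 : IE) (h : isrc e1 = itgt e2) : IE :=
  exist _ _ (imul_pf e1 e2 (f_equal (@proj1_sig _ _) h)).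

Definition Img : sgd := Sgd IV IE isrc itgt imul.

Lemma IV_ext (x y : IV) : proj1_sig x = proj1_sig y -> x = y.
Proof. destruct x, y; simpl; intros; subst; f_equal; apply proof_irrelevance. Qed.
Lemma IE_ext (x y : IE) : proj1_sig x = proj1_sig y -> x = y.
Proof. destruct x, y; simpl; intros; subst; f_equal; apply proof_irrelevance. Qed.

Lemma Img_sgd : is_sgd Img.
Proof.
  pose proof (V_sgd T HT) as HS.
  split; [|split; [|split]]; simpl.
  - intros s t h. apply IV_ext; simpl. apply smul_src; auto.
  - intros s t h. apply IV_ext; simpl. apply smul_tgt; auto.
  - intros s t h h'. apply IE_ext; simpl. apply smul_pi; auto.
  - intros s t r h1 h2 h3 h4. apply IE_ext; simpl. apply smul_assoc; auto.
Qed.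

Lemma Img_fin : finite_sgd Img.
Proof.
  destruct (V_fin T HT) as [[lv Hv] [le He]]. split.
  - apply (sig_list _ lv). auto.
  - apply (sig_list _ le). auto.
Qed.

Definition hincl : hom Img T := Hom Img T (fun x => proj1_sig x) (fun e => proj1_sig e).

Lemma Img_V : V Img.
Proof.
  apply (V_div Img T HT Img_sgd Img_fin).
  exists Img, hincl, (hid Img). split; [apply Img_sgd|split; [|split; [apply hid_hom|split]]].
  - split; [|split]; simpl; intros; try reflexivity. apply smul_pi. apply V_sgd; auto.
  - intros e e' _ _ E. apply IE_ext; auto.
  - split; [|split]; simpl; eauto.
Qed.

Definition imap : hom (Aplus A) Img :=
  Hom (Aplus A) Img (fun x => exist _ (hv psi x) (ex_intro _ x eq_refl))
    (fun d => exist _ (he psi d) (ex_intro _ d eq_refl)).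

Lemma imap_hom : is_hom imap.
Proof.
  split; [|split]; simpl; intros.
  - apply IV_ext; simpl. apply (hom_src _ Hpsi).
  - apply IV_ext; simpl. apply (hom_tgt _ Hpsi).
  - apply IE_ext; simpl. apply (hom_mul _ Hpsi).
Qed.

Lemma imap_onto : onto imap.
Proof.
  split.
  - intros [y [x <-]]. exists x. apply IV_ext; reflexivity.
  - intros [e [d <-]]. exists d. apply IE_ext; reflexivity.
Qed.

Definition img_idx : fidx V A :=
  existT _ Img (exist _ imap (conj Img_V (conj imap_hom imap_onto))).

End Img.

Definition vinj (i : fidx V A) := forall x y, hv (fmap i) x = hv (fmap i) y -> x = y.

Lemma onto_idx F (phi : hom (Aplus A) F) : V F -> is_hom phi ->
  exists i : fidx V A, vinj i /\ kle (fmap i) phi.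
Proof.
  intros HF Hp.
  set (psi := hpair hGA phi).
  assert (Hpsi : is_hom psi) by (apply hpair_hom; [apply hGA_hom|auto]).
  assert (Hinj : forall x y, hv psi x = hv psi y -> x = y).
  { intros x y e. simpl in e. injection e; auto. }
  exists (img_idx (prod_sgd GA F) (V_prod _ _ GA_V HF) psi Hpsi Hinj). split.
  - intros x y e. simpl in e. apply Hinj. apply (f_equal (@proj1_sig _ _) e).
  - intros u v e. simpl in e. apply (f_equal (@proj1_sig _ _)) in e. simpl in e.
    injection e; auto.
Qed.

Lemma onto_rec L : recognizable V A L -> exists i : fidx V A, vinj i /\ sat (fmap i) L.
Proof.
  intro H. destruct (sat_of_rec L H) as [F [phi [HF [Hp Hs]]]].
  destruct (onto_idx F phi HF Hp) as [i [Hi Hk]]. exists i; split; auto.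
  eapply sat_kle; eauto.
Qed.

End Lang.
End PV.


Section Ult.
Variable X : Type.
Variable G : (X -> Prop) -> Prop.
Hypothesis HG : ultra G.

Lemma uS P Q : G P -> (forall x, P x -> Q x) -> G Q.
Proof. apply HG. Qed.
Lemma uI P Q : G P -> G Q -> G (fun x => P x /\ Q x).
Proof. apply HG. Qed.
Lemma uex P : G P -> exists x, P x.
Proof.
  intro H. apply NNPP. intro N. apply (proj1 (proj2 (proj2 HG))).
  apply (uS P); auto. intros x Px. apply N. eauto.
Qed.
Lemma uC P : G P \/ G (fun x => ~ P x).
Proof. apply HG. Qed.

Lemma ulim_ex {Y : Type} (fin : exists l : list Y, forall y, In y l) (f : X -> Y) :
  exists y, G (fun x => f x = y).
Proof.
  destruct fin as [l Hl].
  assert (H : G (fun x => In (f x) l)).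
  { destruct (uC (fun _ => True)) as [H|H].
    - apply (uS _ _ H). auto.
    - destruct (uex _ H) as [x Hx]. contradiction. }
  clear Hl. induction l as [|a l IH].
  - destruct (uex _ H) as [x []].
  - destruct (uC (fun x => f x = a)) as [Ha|Ha]; [eauto|].
    apply IH. apply (uS _ _ (uI _ _ H Ha)). intros x [[E|E] N]; [congruence|auto].
Qed.

Lemma ulim_uniq {Y : Type} (f : X -> Y) y1 y2 :
  G (fun x => f x = y1) -> G (fun x => f x = y2) -> y1 = y2.
Proof. intros H1 H2. destruct (uex _ (uI _ _ H1 H2)) as [x [E1 E2]]. congruence. Qed.

Definition glim {Y : Type} (fin : exists l : list Y, forall y, In y l) (f : X -> Y) : Y :=
  proj1_sig (constructive_indefinite_description _ (ulim_ex fin f)).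
Lemma glim_spec {Y : Type} fin (f : X -> Y) : G (fun x => f x = glim fin f).
Proof. unfold glim. destruct (constructive_indefinite_description _ _). auto. Qed.

Lemma uall {I : Type} (T : list I) (P : I -> X -> Prop) :
  (forall i, In i T -> G (P i)) -> G (fun x => forall i, In i T -> P i x).
Proof.
  induction T as [|a T IH]; intro H.
  - destruct (uC (fun _ => True)) as [H'|H'].
    + apply (uS _ _ H'). intros x _ i [].
    + destruct (uex _ H') as [x Hx]. contradiction.
  - apply (uS _ _ (uI _ _ (H a (or_introl eq_refl)) (IH (fun i Hi => H i (or_intror Hi))))).
    intros x [Ha Hb] i [<-|Hi]; auto.
Qed.
End Ult.

Section PV3.
Variable V : sgd -> Prop.
Hypothesis HV : pseudovariety V.
Variable A : graph.

Definition iota (x : pathE A) : family V A := fun i => he (fmap i) x.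

Lemma iota_compat x : compat (iota x).
Proof. intros i j th Hth Hv He. unfold iota. apply He. Qed.

Lemma factor (i j : fidx V A) : vinj V A i -> kle A (fmap i) (fmap j) ->
  exists th : hom (projT1 i) (projT1 j), is_hom th /\
    (forall x, hv th (hv (fmap i) x) = hv (fmap j) x) /\
    (forall p, he th (he (fmap i) p) = he (fmap j) p).
Proof.
  intros Hi Hk.
  pose proof (fidx_onto V A i) as [ov oe].
  pose (pv := fun y => proj1_sig (constructive_indefinite_description _ (ov y))).
  pose (pe := fun e => proj1_sig (constructive_indefinite_description _ (oe e))).
  assert (Hpv : forall y, hv (fmap i) (pv y) = y).
  { intro y. unfold pv. destruct (constructive_indefinite_description _ _); auto. }
  assert (Hpe : forall e, he (fmap i) (pe e) = e).
  { intro e. unfold pe. destruct (constructive_indefinite_description _ _); auto. }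
  pose proof (fidx_hom V A i) as Hfi. pose proof (fidx_hom V A j) as Hfj.
  exists (Hom _ _ (fun y => hv (fmap j) (pv y)) (fun e => he (fmap j) (pe e))).
  assert (Cv : forall x, hv (fmap j) (pv (hv (fmap i) x)) = hv (fmap j) x).
  { intro x. f_equal. apply Hi. apply Hpv. }
  assert (Ce : forall p, he (fmap j) (pe (he (fmap i) p)) = he (fmap j) p).
  { intro p. apply Hk. apply Hpe. }
  split; [|split; simpl; auto].
  split; [|split]; simpl.
  - intro e. rewrite (hom_src _ Hfj). rewrite <- (Hpe e) at 2. rewrite (hom_src _ Hfi).
    symmetry; apply Cv.
  - intro e. rewrite (hom_tgt _ Hfj). rewrite <- (Hpe e) at 2. rewrite (hom_tgt _ Hfi).
    symmetry; apply Cv.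
  - intros s t h h'.
    destruct (oe s) as [d1 E1]. destruct (oe t) as [d2 E2]. subst s t.
    assert (hd : ssrc (Aplus A) d1 = stgt (Aplus A) d2).
    { apply Hi. rewrite <- (hom_src _ Hfi), <- (hom_tgt _ Hfi). exact h. }
    assert (E : smul _ (he (fmap i) d1) (he (fmap i) d2) h = he (fmap i) (smul _ d1 d2 hd)).
    { symmetry. apply (hom_mul _ Hfi). }
    rewrite E, Ce.
    rewrite (hom_mul _ Hfj _ _ hd (hom_mul_proof _ Hfj _ _ hd)).
    apply smul_congr; [apply (V_sgd V HV); apply fidx_V| |]; symmetry; apply Ce.
Qed.

Hypothesis Afv : finite_vertex_graph A.

Lemma density (w : family V A) : compat w -> forall T : list (fidx V A),
  exists z, forall i, In i T -> he (fmap i) z = w i.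
Proof.
  intros Hw T.
  destruct (prodrec V HV A T) as [F [phi [HF [Hp Hs]]]].
  destruct (onto_idx V HV A Afv F phi HF Hp) as [m [Hm Hk]].
  destruct (proj2 (fidx_onto V A m) (w m)) as [z Hz].
  exists z. intros i Hi.
  destruct (factor m i Hm) as [th [Hth [Hv He]]].
  { intros u v e. apply (Hs i Hi). apply Hk; auto. }
  rewrite <- (Hw m i th Hth Hv He). rewrite <- Hz. symmetry; apply He.
Qed.
End PV3.

Section Lim.
Variable V : sgd -> Prop.
Hypothesis HV : pseudovariety V.
Variable A : graph.
Variable X : Type.
Variable G : (X -> Prop) -> Prop.
Hypothesis HG : ultra G.

Definition flim (f : X -> family V A) : family V A :=
  fun i => glim X G HG (proj2 (V_fin V HV _ (fidx_V V A i))) (fun x => f x i).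

Lemma flim_spec f i : G (fun x => f x i = flim f i).
Proof. unfold flim. apply (glim_spec X G HG _ (fun x => f x i)). Qed.

Lemma flim_list f (T : list (fidx V A)) : G (fun x => forall i, In i T -> f x i = flim f i).
Proof. apply (uall X G HG T (fun i x => f x i = flim f i)). intros; apply flim_spec. Qed.

Lemma flim_compat f : (forall x, compat (f x)) -> compat (flim f).
Proof.
  intros Hc i j th Hth Hv He.
  apply (ulim_uniq X G HG (fun x => f x j)).
  - apply (uS X G HG _ _ (flim_spec f i)). intros x E. rewrite <- E.
    symmetry; apply (Hc x i j th Hth Hv He).
  - apply flim_spec.
Qed.
End Lim.


Section P4.
Variable V : sgd -> Prop.
Hypothesis HV : pseudovariety V.
Variable A : graph.

Lemma rec_fibers (S : list (fidx V A)) (c : family V A) :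
  recognizable V A (fun x => forall s, In s S -> he (fmap s) x = c s).
Proof.
  induction S as [|s S IH].
  - apply (rec_ext V A (fun _ => True)); [|apply rec_full; auto].
    intro x; split; auto. intros _ s [].
  - assert (Hs : recognizable V A (fun x => he (fmap s) x = c s)).
    { apply (rec_of_sat V A _ (fmap s) (fun x => he (fmap s) x = c s) (fidx_V V A s) (fidx_hom V A s)).
      intros u v e E; congruence. }
    eapply (rec_ext V A); [|apply (rec_inter V HV A _ _ Hs IH)].
    intro x; split.
    + intros [H1 H2] t [<-|Ht]; auto.
    + intro H; split; [apply H; left; auto|].
      intros t Ht; apply H; right; auto.
Qed.

Definition XP := {p : pathE A * pathE A | psrc A (fst p) = ptgt A (snd p)}.
Definition prp (p : XP) : pathE A :=
  pmul A (fst (proj1_sig p)) (snd (proj1_sig p)) (proj2_sig p).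

Hypothesis Afv : finite_vertex_graph A.
Hypothesis Hcc : recog_concat_closed V A.

Lemma P4_open : multiplication_open V A.
Proof.
  intros U HU w Hw [Hw' [u0 [v0 [hc [Hu0 [Hv0 [HU0 Hprod]]]]]]].
  clear Hw'.
  destruct (HU u0 v0 Hu0 Hv0 hc HU0) as [S HS].
  set (L := fun x => forall s, In s S -> he (fmap s) x = u0 s).
  set (K := fun x => forall s, In s S -> he (fmap s) x = v0 s).
  assert (HLK : recognizable V A (Defs.concat A L K)).
  { apply Hcc; apply rec_fibers. }
  destruct (onto_rec V HV A Afv _ HLK) as [k [Hk Hsk]].
  exists (k :: S). intros w' Hw'c Hag.
  pose proof (fun i => fidx_hom V A i) as Hfh.
  pose proof (fun i => V_sgd V HV _ (fidx_V V A i)) as Hsg.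
  set (B := fun b : XP -> Prop => exists T : list (fidx V A),
        b = (fun p => L (fst (proj1_sig p)) /\ K (snd (proj1_sig p)) /\
                      forall i, In i T -> he (fmap i) (prp p) = w' i)).
  assert (Hne : forall T : list (fidx V A), exists p : XP,
     L (fst (proj1_sig p)) /\ K (snd (proj1_sig p)) /\
     forall i, In i T -> he (fmap i) (prp p) = w' i).
  { intro T.
    destruct (density V HV A Afv w' Hw'c (k :: T)) as [z Hz].
    destruct (density V HV A Afv u0 Hu0 (k :: S)) as [x0 Hx0].
    destruct (density V HV A Afv v0 Hv0 (k :: S)) as [y0 Hy0].
    assert (h0 : ssrc (Aplus A) x0 = stgt (Aplus A) y0).
    { apply Hk. rewrite <- (hom_src _ (Hfh k)), <- (hom_tgt _ (Hfh k)).
      rewrite (Hx0 k (or_introl eq_refl)), (Hy0 k (or_introl eq_refl)). apply hc. }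
    assert (Cz : Defs.concat A L K z).
    { apply (Hsk (smul (Aplus A) x0 y0 h0)).
      - rewrite (hom_mul _ (Hfh k) _ _ h0 (hom_mul_proof _ (Hfh k) _ _ h0)).
        rewrite (Hz k (or_introl eq_refl)), (Hag k (or_introl eq_refl)), (Hprod k).
        apply smul_congr; auto; [apply Hx0|apply Hy0]; left; auto.
      - exists x0, y0, h0. split; [|split; auto].
        + intros s Hs. apply Hx0. right; auto.
        + intros s Hs. apply Hy0. right; auto. }
    destruct Cz as [x [y [h [Lx [Ky Ez]]]]].
    exists (exist _ (x, y) h). simpl. split; [auto|split; [auto|]].
    intros i Hi. rewrite <- (Hz i (or_intror Hi)). rewrite Ez. reflexivity. }
  destruct (ultra_ext B) as [G [HG HB]].
  { exists (fun p : XP => L (fst (proj1_sig p)) /\ K (snd (proj1_sig p)) /\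
                      forall i, In i [] -> he (fmap i) (prp p) = w' i). exists []. reflexivity. }
  { intros b1 b2 [T1 ->] [T2 ->]. eexists. split; [exists (T1 ++ T2); reflexivity|].
    intros p [Lp [Kp Hp]]. split; (split; [auto|split; [auto|]]); intros i Hi; apply Hp;
      apply in_or_app; auto. }
  { intros b [T ->]. apply Hne. }
  set (u' := flim V HV A XP G HG (fun p => iota V A (fst (proj1_sig p)))).
  set (v' := flim V HV A XP G HG (fun p => iota V A (snd (proj1_sig p)))).
  assert (Gu : forall i, G (fun p => he (fmap i) (fst (proj1_sig p)) = u' i)).
  { intro i. apply (flim_spec V HV A XP G HG (fun p => iota V A (fst (proj1_sig p))) i). }
  assert (Gv : forall i, G (fun p => he (fmap i) (snd (proj1_sig p)) = v' i)).
  { intro i. apply (flim_spec V HV A XP G HG (fun p => iota V A (snd (proj1_sig p))) i). }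
  assert (GB : forall T, G (fun p : XP => L (fst (proj1_sig p)) /\ K (snd (proj1_sig p)) /\
                      forall i, In i T -> he (fmap i) (prp p) = w' i)).
  { intro T. apply HB. exists T; reflexivity. }
  assert (hc' : composable u' v').
  { intro i. destruct (uex XP G HG _ (uI XP G HG _ _ (Gu i) (Gv i))) as [[[x y] h] [E1 E2]].
    simpl in *. rewrite <- E1, <- E2. apply (hom_mul_proof _ (Hfh i)). exact h. }
  assert (Cu : compat u').
  { apply flim_compat. intro; apply iota_compat. }
  assert (Cv : compat v').
  { apply flim_compat. intro; apply iota_compat. }
  split; [exact Hw'c|].
  exists u', v', hc'. split; [auto|split; [auto|split]].
  - apply HS; auto. intros i Hi. split.
    + destruct (uex XP G HG _ (uI XP G HG _ _ (Gu i) (GB []))) as [p [E [Lp _]]].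
      rewrite <- E. apply Lp; auto.
    + destruct (uex XP G HG _ (uI XP G HG _ _ (Gv i) (GB []))) as [p [E [_ [Kp _]]]].
      rewrite <- E. apply Kp; auto.
  - intro i.
    destruct (uex XP G HG _ (uI XP G HG _ _ (uI XP G HG _ _ (Gu i) (Gv i)) (GB [i])))
      as [[[x y] h] [[E1 E2] [_ [_ E3]]]]. simpl in *.
    rewrite <- (E3 i (or_introl eq_refl)). unfold prp; simpl.
    etransitivity; [apply (hom_mul _ (Hfh i) (x : sE (Aplus A)) y h (hom_mul_proof _ (Hfh i) _ _ h))|].
    apply smul_congr; auto.
Qed.
End P4.


Section Nil.
Variable E : Type.
Variable n : nat.

Definition okw (o : option (list E)) : Prop :=
  match o with None => True | Some l => 1 <= length l <= n end.

Definition cmb (o1 o2 : option (list E)) : option (list E) :=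
  match o1, o2 with
  | Some l1, Some l2 => if Nat.leb (length (l1 ++ l2)) n then Some (l1 ++ l2) else None
  | _, _ => None
  end.

Lemma cmb_ok o1 o2 : okw o1 -> okw o2 -> okw (cmb o1 o2).
Proof.
  destruct o1 as [l1|], o2 as [l2|]; simpl; auto.
  intros H1 H2. destruct (Nat.leb_spec (length (l1 ++ l2)) n); simpl; auto.
  rewrite length_app in *. lia.
Qed.

Lemma cmb_assoc a b c : cmb (cmb a b) c = cmb a (cmb b c).
Proof.
  destruct a as [l1|], b as [l2|], c as [l3|]; simpl; auto.
  - destruct (Nat.leb_spec (length (l1 ++ l2)) n);
    destruct (Nat.leb_spec (length (l2 ++ l3)) n); simpl; auto;
    rewrite ?length_app in *;
    repeat match goal with |- context [Nat.leb ?x ?y] => destruct (Nat.leb_spec x y) end;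
    rewrite ?length_app in *; try rewrite app_assoc; auto; lia.
  - destruct (Nat.leb (length (l1 ++ l2)) n); auto.
Qed.

Definition NE := {o : option (list E) | okw o}.
Definition Nn : sgd := Sgd unit NE (fun _ => tt) (fun _ => tt)
  (fun s t _ => exist okw (cmb (proj1_sig s) (proj1_sig t)) (cmb_ok _ _ (proj2_sig s) (proj2_sig t))).

Lemma NE_ext (x y : NE) : proj1_sig x = proj1_sig y -> x = y.
Proof. destruct x, y; simpl; intros; subst; f_equal; apply proof_irrelevance. Qed.

Lemma Nn_sgd : is_sgd Nn.
Proof.
  split; [|split; [|split]]; simpl; intros; try reflexivity.
  apply NE_ext; simpl. apply cmb_assoc.
Qed.

Lemma Nn_one : one_vertex Nn.
Proof. exists tt. intros []; reflexivity. Qed.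

Lemma is_prod_len f m w : is_prod Nn f m w ->
  proj1_sig w = None \/ exists l, proj1_sig w = Some l /\ m + 1 <= length l.
Proof.
  induction 1 as [|m w h Hp IH].
  - destruct (f 0) as [[l|] Hl]; simpl in *; [right; exists l; split; [auto|lia]|left; auto].
  - simpl. destruct IH as [E1|[l [E1 Hl]]]; rewrite E1; [left; auto|].
    destruct (f (S m)) as [[l2|] Hl2]; simpl in *; [|left; auto].
    destruct (Nat.leb_spec (length (l ++ l2)) n); [right|left; auto].
    exists (l ++ l2). rewrite length_app. split; [auto|lia].
Qed.

Lemma Nn_nil : nilpotent Nn.
Proof.
  exists (exist okw None I), n. intros f w Hp. apply NE_ext; simpl.
  destruct (is_prod_len f n w Hp) as [H|[l [El Hl]]]; auto.
  destruct w as [o Ho]; simpl in *; subst. simpl in Ho. lia.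
Qed.

Fixpoint allw (lE : list E) (m : nat) : list (list E) :=
  match m with
  | 0 => [[]]
  | S m => [] :: flat_map (fun e => map (cons e) (allw lE m)) lE
  end.

Lemma allw_cover lE : (forall e, In e lE) -> forall m l, length l <= m -> In l (allw lE m).
Proof.
  intros HE m. induction m as [|m IH]; intros l Hl.
  - destruct l; simpl in *; [auto|lia].
  - destruct l as [|e l]; simpl; [auto|right].
    apply in_flat_map. exists e. split; auto. apply in_map. apply IH. simpl in Hl; lia.
Qed.

Lemma Nn_fin : (exists lE : list E, forall e, In e lE) -> finite_sgd Nn.
Proof.
  intros [lE HE]. split.
  - exists [tt]. intros []; left; auto.
  - apply (sig_list okw (None :: map Some (allw lE n))).
    intros [l|] Hl; [right|left; auto]. apply in_map. apply allw_cover; auto.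
    simpl in Hl; lia.
Qed.
End Nil.

Section NilMap.
Variable A : graph.
Variable n : nat.

Definition nilraw (x : pathE A) : option (list (gE A)) :=
  if Nat.leb (length (word A x)) n then Some (word A x) else None.

Lemma nilraw_ok x : okw (gE A) n (nilraw x).
Proof.
  unfold nilraw. destruct (Nat.leb_spec (length (word A x)) n); simpl; auto.
  split; [unfold word; simpl; lia|auto].
Qed.

Definition nilh : hom (Aplus A) (Nn (gE A) n) :=
  Hom (Aplus A) (Nn (gE A) n) (fun _ => tt) (fun x => exist _ (nilraw x) (nilraw_ok x)).

Lemma nilh_hom : is_hom nilh.
Proof.
  split; [|split]; simpl; intros; try reflexivity.
  apply NE_ext; simpl. unfold nilraw. rewrite word_mul.
  generalize (word A s) (word A t). intros l1 l2.
  destruct (Nat.leb_spec (length l1) n) as [H1|H1];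
  destruct (Nat.leb_spec (length l2) n) as [H2|H2]; unfold cmb;
  destruct (Nat.leb_spec (length (l1 ++ l2)) n) as [H3|H3]; auto;
  rewrite length_app in H3; lia.
Qed.
End NilMap.


Section P5.
Variable V : sgd -> Prop.
Hypothesis HV : pseudovariety V.
Variable A : graph.
Hypothesis Afin : finite_graph A.
Hypothesis HN : containsN V.
Hypothesis Hop : multiplication_open V A.

Lemma V_Nn n : V (Nn (gE A) n).
Proof.
  apply HN; [apply Nn_sgd|apply Nn_fin; apply (proj2 Afin)|apply Nn_one|apply Nn_nil].
Qed.

Definition decp (L K : lang A) (z : pathE A) (q : pathE A * pathE A) : Prop :=
  exists h : psrc A (fst q) = ptgt A (snd q), L (fst q) /\ K (snd q) /\ z = pmul A (fst q) (snd q) h.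
Definition dec (L K : lang A) (z : pathE A) : pathE A * pathE A :=
  epsilon (inhabits (z, z)) (decp L K z).
Lemma dec_spec L K z : Defs.concat A L K z -> decp L K z (dec L K z).
Proof.
  intros [u [v [h [Lu [Kv E]]]]]. unfold dec. apply epsilon_spec.
  exists (u, v). exists h. auto.
Qed.

Lemma P5 L K : recognizable V A L -> recognizable V A K ->
  recognizable V A (Defs.concat A L K).
Proof.
  intros HL HK.
  pose proof (proj1 Afin) as Afv.
  pose proof (fun i => fidx_hom V A i) as Hfh.
  pose proof (fun i => V_sgd V HV _ (fidx_V V A i)) as Hsg.
  destruct (onto_rec V HV A Afv L HL) as [a [Ha Hsa]].
  destruct (onto_rec V HV A Afv K HK) as [b [Hb Hsb]].
  set (LK := Defs.concat A L K).
  apply NNPP; intro NR.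
  assert (Hbad : forall T : list (fidx V A), exists z z', LK z /\ ~ LK z' /\
            forall i, In i T -> he (fmap i) z = he (fmap i) z').
  { intro T. apply NNPP; intro N. apply NR.
    destruct (prodrec V HV A T) as [F [phi [HF [Hp Hs]]]].
    apply (rec_of_sat V A F phi LK HF Hp). intros u v e Lu. apply NNPP; intro nv. apply N.
    exists u, v. split; [auto|split; [auto|]]. intros i Hi. apply (Hs i Hi); auto. }
  set (X := (pathE A * pathE A)%type).
  set (Bp := fun (T : list (fidx V A)) (p : X) => LK (fst p) /\ ~ LK (snd p) /\
            forall i, In i T -> he (fmap i) (fst p) = he (fmap i) (snd p)).
  destruct (ultra_ext (fun bb => exists T, bb = Bp T)) as [G [HG HB]].
  { exists (Bp []). exists []. reflexivity. }
  { intros b1 b2 [T1 ->] [T2 ->]. exists (Bp (T1 ++ T2)). split; [exists (T1 ++ T2); reflexivity|].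
    intros p [L1 [L2 L3]]. split; (split; [auto|split; [auto|]]); intros i Hi; apply L3;
      apply in_or_app; auto. }
  { intros bb [T ->]. destruct (Hbad T) as [z [z' H]]. exists (z, z'). exact H. }
  assert (GB : forall T, G (Bp T)). { intro T. apply HB. exists T; reflexivity. }
  set (u := flim V HV A X G HG (fun p => iota V A (fst p))).
  set (xb := flim V HV A X G HG (fun p => iota V A (fst (dec L K (fst p))))).
  set (yb := flim V HV A X G HG (fun p => iota V A (snd (dec L K (fst p))))).
  assert (Gu : forall i, G (fun p : X => he (fmap i) (fst p) = u i)).
  { intro i. apply (flim_spec V HV A X G HG (fun p => iota V A (fst p)) i). }
  assert (Gx : forall i, G (fun p : X => he (fmap i) (fst (dec L K (fst p))) = xb i)).
  { intro i. apply (flim_spec V HV A X G HG (fun p => iota V A (fst (dec L K (fst p)))) i). }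
  assert (Gy : forall i, G (fun p : X => he (fmap i) (snd (dec L K (fst p))) = yb i)).
  { intro i. apply (flim_spec V HV A X G HG (fun p => iota V A (snd (dec L K (fst p)))) i). }
  assert (Cu : compat u) by (apply flim_compat; intro; apply iota_compat).
  assert (Cx : compat xb) by (apply flim_compat; intro; apply iota_compat).
  assert (Cy : compat yb) by (apply flim_compat; intro; apply iota_compat).
  assert (hcb : composable xb yb).
  { intro i. destruct (uex X G HG _ (uI X G HG _ _ (uI X G HG _ _ (Gx i) (Gy i)) (GB [])))
      as [p [[E1 E2] [Lp _]]].
    destruct (dec_spec L K (fst p) Lp) as [h _].
    rewrite <- E1, <- E2. apply (hom_mul_proof _ (Hfh i)). exact h. }
  set (Uset := fun u1 v1 : family V A =>
         (exists x, L x /\ u1 a = he (fmap a) x) /\ (exists y, K y /\ v1 b = he (fmap b) y)).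
  assert (HUo : openD Uset).
  { intros u1 v1 _ _ _ [[x [Lx Ex]] [y [Ky Ey]]]. exists [a; b].
    intros u' v' _ _ _ Hag. split.
    - exists x. split; auto. rewrite (proj1 (Hag a (or_introl eq_refl))); auto.
    - exists y. split; auto. rewrite (proj2 (Hag b (or_intror (or_introl eq_refl)))); auto. }
  assert (Hmi : mul_image Uset u).
  { split; [exact Cu|]. exists xb, yb, hcb. split; [auto|split; [auto|split]].
    - split.
      + destruct (uex X G HG _ (uI X G HG _ _ (Gx a) (GB []))) as [p [E [Lp _]]].
        destruct (dec_spec L K (fst p) Lp) as [h [Lx _]].
        exists (fst (dec L K (fst p))). split; auto.
      + destruct (uex X G HG _ (uI X G HG _ _ (Gy b) (GB []))) as [p [E [Lp _]]].
        destruct (dec_spec L K (fst p) Lp) as [h [_ [Ky _]]].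
        exists (snd (dec L K (fst p))). split; auto.
    - intro i.
      destruct (uex X G HG _ (uI X G HG _ _ (uI X G HG _ _ (Gu i) (uI X G HG _ _ (Gx i) (Gy i))) (GB [])))
        as [p [[E0 [E1 E2]] [Lp _]]].
      destruct (dec_spec L K (fst p) Lp) as [h [_ [_ Ep]]].
      rewrite <- E0. rewrite Ep at 1.
      etransitivity; [apply (hom_mul _ (Hfh i) (fst (dec L K (fst p)) : sE (Aplus A)) _ h
                               (hom_mul_proof _ (Hfh i) _ _ h))|].
      apply smul_congr; auto. }
  destruct (Hop Uset HUo u Cu Hmi) as [S0 HS0].
  destruct (uex X G HG _ (uI X G HG _ _ (GB S0) (flim_list V HV A X G HG (fun p => iota V A (fst p)) S0)))
    as [[z z'] [[LKz [nLKz' Hag]] Hzu]]. simpl in *.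
  assert (Hmz : mul_image Uset (iota V A z')).
  { apply (HS0 (iota V A z') (iota_compat V A z')). intros i Hi. unfold iota.
    rewrite <- (Hag i Hi). apply (Hzu i Hi). }
  destruct Hmz as [_ [u1 [v1 [hc1 [Cu1 [Cv1 [[[x [Lx Ex]] [y [Ky Ey]]] Hp1]]]]]]].
  set (n := length (word A z')).
  set (psi := hpair (fmap a) (hpair (fmap b) (nilh A n))).
  assert (Hpsi : is_hom psi).
  { apply hpair_hom; [apply Hfh|apply hpair_hom; [apply Hfh|apply nilh_hom]]. }
  assert (VF : V (prod_sgd (projT1 a) (prod_sgd (projT1 b) (Nn (gE A) n)))).
  { apply (V_prod V HV); [apply fidx_V|apply (V_prod V HV); [apply fidx_V|apply V_Nn]]. }
  destruct (onto_idx V HV A Afv _ psi VF Hpsi) as [k [Hk Hkk]].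
  assert (Hka : kle A (fmap k) (fmap a)).
  { intros p q e. apply (kle_pair_l A (fmap a) (hpair (fmap b) (nilh A n))). apply Hkk; auto. }
  assert (Hkb : kle A (fmap k) (fmap b)).
  { intros p q e. apply (kle_pair_l A (fmap b) (nilh A n)).
    apply (kle_pair_r A (fmap a) (hpair (fmap b) (nilh A n))). apply Hkk; auto. }
  assert (Hkn : kle A (fmap k) (nilh A n)).
  { intros p q e. apply (kle_pair_r A (fmap b) (nilh A n)).
    apply (kle_pair_r A (fmap a) (hpair (fmap b) (nilh A n))). apply Hkk; auto. }
  destruct (factor V HV A k a Hk Hka) as [tha [Htha [Hva Hea]]].
  destruct (factor V HV A k b Hk Hkb) as [thb [Hthb [Hvb Heb]]].
  destruct (proj2 (fidx_onto V A k) (u1 k)) as [x1 Ex1].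
  destruct (proj2 (fidx_onto V A k) (v1 k)) as [y1 Ey1].
  assert (h1 : ssrc (Aplus A) x1 = stgt (Aplus A) y1).
  { apply Hk. rewrite <- (hom_src _ (Hfh k)), <- (hom_tgt _ (Hfh k)). rewrite Ex1, Ey1. apply hc1. }
  assert (Ek : he (fmap k) (smul (Aplus A) x1 y1 h1) = he (fmap k) z').
  { rewrite (hom_mul _ (Hfh k) _ _ h1 (hom_mul_proof _ (Hfh k) _ _ h1)).
    change (he (fmap k) z') with (iota V A z' k). rewrite (Hp1 k).
    apply smul_congr; auto. }
  assert (Ez : smul (Aplus A) x1 y1 h1 = z').
  { apply Hkn in Ek. apply (f_equal (@proj1_sig _ _)) in Ek. simpl in Ek.
    assert (E1 : nilraw A n z' = Some (word A z')).
    { unfold nilraw, n. rewrite Nat.leb_refl. reflexivity. }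
    rewrite E1 in Ek. unfold nilraw in Ek.
    destruct (Nat.leb (length (word A (pmul A x1 y1 h1))) n); [|discriminate].
    apply word_inj. exact (f_equal (fun o => match o with Some l => l | None => nil end) Ek). }
  apply nLKz'. exists x1, y1, h1. split; [|split; [|auto]].
  - apply (Hsa x); auto. rewrite <- Ex. rewrite <- (Cu1 k a tha Htha Hva Hea).
    rewrite <- Ex1. apply Hea.
  - apply (Hsb y); auto. rewrite <- Ey. rewrite <- (Cv1 k b thb Hthb Hvb Heb).
    rewrite <- Ey1. apply Heb.
Qed.
End P5.


Section PathsMore.
Variable A : graph.

Definition single (a : gE A) : pathE A := exist _ (a, []) I.

Lemma path_cons e g l (H : is_path A e (g :: l)) :
  exist (fun ep => is_path A (fst ep) (snd ep)) (e, g :: l) H =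
  pmul A (single e) (exist _ (g, l) (proj2 H)) (proj1 H).
Proof. apply path_ext. reflexivity. Qed.

Lemma pmul_congr x x' y y' h h' : x = x' -> y = y' -> pmul A x y h = pmul A x' y' h'.
Proof. intros; subst; apply path_ext; reflexivity. Qed.

Lemma is_path_app_inv e p f q : is_path A e (p ++ f :: q) ->
  is_path A e p /\ gsrc A (plast A e p) = gtgt A f /\ is_path A f q.
Proof.
  revert e; induction p as [|g p IH]; simpl; intros e H.
  - destruct H; auto.
  - destruct H as [H1 H2]. destruct (IH g H2) as [? [? ?]]. auto.
Qed.
End PathsMore.

Section P2.
Variable V : sgd -> Prop.
Hypothesis HV : pseudovariety V.
Hypothesis Hcc : concatenation_closed V.
Variable A : graph.
Hypothesis Afv : finite_vertex_graph A.
Variable F : sgd.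
Variable phi : hom (Aplus A) F.
Hypothesis HF : V F.
Hypothesis Hp : is_hom phi.

Definition KT := (gV A * gV A * sE F)%type.
Definition key (a : gE A) : KT := (gtgt A a, gsrc A a, he phi (single A a)).
Definition BE := {kk : KT | exists a, key a = kk}.
Definition B : graph := Graph (gV A) BE (fun kk => snd (fst (proj1_sig kk)))
  (fun kk => fst (fst (proj1_sig kk))).

Lemma B_fin : finite_graph B.
Proof.
  destruct Afv as [lv Hv]. destruct (V_fin V HV F HF) as [_ [lf Hf]].
  split; [exists lv; auto|].
  apply (sig_list _ (list_prod (list_prod lv lv) lf)). intros x _.
  apply list_prod_cover; auto. apply list_prod_cover; auto.
Qed.

Definition pe (a : gE A) : gE B := exist _ (key a) (ex_intro _ a eq_refl).

Lemma is_path_map e p : is_path A e p -> is_path B (pe e) (map pe p).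
Proof.
  revert e; induction p as [|g p IH]; simpl; auto. intros e [H1 H2]. split; auto.
Qed.

Lemma plast_map e p : plast B (pe e) (map pe p) = pe (plast A e p).
Proof. revert e; induction p; simpl; auto. Qed.

Definition pp (x : pathE A) : pathE B :=
  exist _ (pe (fst (proj1_sig x)), map pe (snd (proj1_sig x))) (is_path_map _ _ (proj2_sig x)).

Lemma pp_src x : psrc B (pp x) = psrc A x.
Proof. unfold psrc, pp; simpl. rewrite plast_map. reflexivity. Qed.
Lemma pp_tgt x : ptgt B (pp x) = ptgt A x.
Proof. reflexivity. Qed.

Lemma pp_mul x y h h' : pp (pmul A x y h) = pmul B (pp x) (pp y) h'.
Proof. apply path_ext. simpl. rewrite map_app. reflexivity. Qed.

Lemma phi_det_aux : forall l e f m (Hx : is_path A e l) (Hy : is_path A f m),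
  pe e = pe f -> map pe l = map pe m ->
  he phi (exist _ (e, l) Hx) = he phi (exist _ (f, m) Hy).
Proof.
  pose proof (V_sgd V HV F HF) as HFs.
  assert (Base : forall e f (Hx : is_path A e []) (Hy : is_path A f []), pe e = pe f ->
      he phi (exist _ (e, []) Hx) = he phi (exist _ (f, []) Hy)).
  { intros e f Hx Hy E. apply (f_equal (@proj1_sig _ _)) in E. simpl in E.
    unfold key in E. injection E; intros E3 _ _.
    replace (exist _ (e, []) Hx) with (single A e) by (apply path_ext; reflexivity).
    replace (exist _ (f, []) Hy) with (single A f) by (apply path_ext; reflexivity).
    exact E3. }
  induction l as [|g l IH]; intros e f m Hx Hy E1 E2.
  - destruct m; [apply Base; auto|discriminate].
  - destruct m as [|g' m]; [discriminate|].
    assert (E3 : pe g = pe g') by exact (f_equal (fun l0 => hd (pe g) l0) E2).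
    assert (E4 : map pe l = map pe m) by exact (f_equal (@tl _) E2).
    rewrite (path_cons A e g l Hx), (path_cons A f g' m Hy).
    etransitivity; [apply (hom_mul _ Hp (single A e : sE (Aplus A)) (exist _ (g, l) (proj2 Hx))
                      (proj1 Hx) (hom_mul_proof _ Hp (single A e : sE (Aplus A)) (exist _ (g, l) (proj2 Hx)) (proj1 Hx)))|].
    etransitivity; [|symmetry; apply (hom_mul _ Hp (single A f : sE (Aplus A)) (exist _ (g', m) (proj2 Hy))
                      (proj1 Hy) (hom_mul_proof _ Hp (single A f : sE (Aplus A)) (exist _ (g', m) (proj2 Hy)) (proj1 Hy)))].
    apply smul_congr; auto.
    exact (Base e f I I E1).
Qed.

Lemma phi_det x y : pp x = pp y -> he phi x = he phi y.
Proof.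
  intro E. apply (f_equal (@proj1_sig _ _)) in E. simpl in E.
  destruct x as [[e l] Hx], y as [[f m] Hy]. simpl in E.
  apply phi_det_aux; [exact (f_equal fst E)|exact (f_equal snd E)].
Qed.

Lemma pp_onto_aux : forall l kk (H : is_path B kk l), exists x, pp x = exist _ (kk, l) H.
Proof.
  induction l as [|k2 l IH]; intros kk H.
  - destruct kk as [kk [a Ea]]. exists (single A a). apply path_ext. simpl.
    f_equal. unfold pe. f_equal. apply (@eq_sig_hprop KT); [intros; apply proof_irrelevance|].
    simpl. auto.
  - destruct H as [H1 H2]. destruct (IH k2 H2) as [x' Ex'].
    destruct kk as [kk [a Ea]].
    assert (Hp' : is_path A a (fst (proj1_sig x') :: snd (proj1_sig x'))).
    { split; [|apply (proj2_sig x')].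
      apply (f_equal (@proj1_sig _ _)) in Ex'. simpl in Ex'. injection Ex'; intros _ E.
      simpl in H1. rewrite <- Ea in H1. unfold key in H1. simpl in H1.
      rewrite H1, <- E. reflexivity. }
    exists (exist (fun ep => is_path A (fst ep) (snd ep)) (a, fst (proj1_sig x') :: snd (proj1_sig x')) Hp'). apply path_ext. simpl.
    apply (f_equal (@proj1_sig _ _)) in Ex'. simpl in Ex'. injection Ex'; intros E2 E1.
    rewrite E1, E2. f_equal. unfold pe. apply (@eq_sig_hprop KT); [intros; apply proof_irrelevance|].
    simpl; auto.
Qed.

Lemma pp_onto y : exists x, pp x = y.
Proof. destruct y as [[kk l] H]. apply pp_onto_aux. Qed.

Definition pre (y : pathE B) : pathE A :=
  proj1_sig (constructive_indefinite_description _ (pp_onto y)).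
Lemma pre_spec y : pp (pre y) = y.
Proof. unfold pre. destruct (constructive_indefinite_description _ _); auto. Qed.
Arguments pre : simpl never.

Definition phi' : hom (Aplus B) F := Hom (Aplus B) F (fun v => hv phi v) (fun y => he phi (pre y)).

Lemma pre_src y : psrc A (pre y) = psrc B y.
Proof. rewrite <- (pre_spec y) at 2. rewrite pp_src. reflexivity. Qed.
Lemma pre_tgt y : ptgt A (pre y) = ptgt B y.
Proof. rewrite <- (pre_spec y) at 2. reflexivity. Qed.

Lemma phi'_hom : is_hom phi'.
Proof.
  pose proof (V_sgd V HV F HF) as HFs.
  split; [|split]; simpl.
  - intro y. rewrite (hom_src _ Hp). simpl. rewrite pre_src. reflexivity.
  - intro y. rewrite (hom_tgt _ Hp). simpl. rewrite pre_tgt. reflexivity.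
  - intros s t h h'.
    assert (hd : psrc A (pre s) = ptgt A (pre t)).
    { rewrite pre_src, pre_tgt. exact h. }
    transitivity (he phi (pmul A (pre s) (pre t) hd)).
    + apply phi_det. rewrite (pre_spec (pmul B s t h)).
      rewrite (pp_mul _ _ hd (eq_trans (pp_src _) (eq_trans hd (pp_tgt _)))).
      apply pmul_congr; symmetry; apply pre_spec.
    + apply (hom_mul _ Hp (pre s : sE (Aplus A)) (pre t) hd).
Qed.

Lemma phi'_pp x : he phi' (pp x) = he phi x.
Proof. simpl. apply phi_det. apply pre_spec. Qed.

Definition ph : hom (Aplus A) (Aplus B) := Hom (Aplus A) (Aplus B) (fun v => v) pp.
Lemma ph_hom : is_hom ph.
Proof.
  split; [|split]; simpl.
  - intro; apply pp_src.
  - intro; reflexivity.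
  - intros; apply pp_mul.
Qed.

Lemma pp_split v y1 y2 h : pp v = pmul B y1 y2 h ->
  exists v1 v2 h', v = pmul A v1 v2 h' /\ pp v1 = y1 /\ pp v2 = y2.
Proof.
  intro E. apply (f_equal (@proj1_sig _ _)) in E.
  destruct v as [[e l] Hv], y1 as [[k1 l1] H1], y2 as [[k2 l2] H2]. simpl in E.
  injection E; intros E2 E1.
  destruct (map_eq_app _ _ _ _ E2) as [la [lb' [El [Ea Eb']]]].
  destruct (map_eq_cons _ _ Eb') as [f [lb [Elb [Ef Eb]]]]. subst l lb'.
  simpl in Hv. destruct (is_path_app_inv A e la f lb Hv) as [Pa [Pm Pb]].
  exists (exist _ (e, la) Pa), (exist _ (f, lb) Pb), Pm. split; [|split].
  - apply path_ext. reflexivity.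
  - apply path_ext. simpl. rewrite E1, Ea. reflexivity.
  - apply path_ext. simpl. rewrite Ef, Eb. reflexivity.
Qed.

Lemma P2 L K : sat A phi L -> sat A phi K -> recognizable V A (Defs.concat A L K).
Proof.
  intros HL HK.
  set (L' := fun y => L (pre y)). set (K' := fun y => K (pre y)).
  assert (RL : recognizable V B L').
  { apply (rec_of_sat V B F phi' L' HF phi'_hom). intros u v e Lu. apply (HL (pre u)); auto. }
  assert (RK : recognizable V B K').
  { apply (rec_of_sat V B F phi' K' HF phi'_hom). intros u v e Lu. apply (HK (pre u)); auto. }
  destruct (sat_of_rec V B _ (Hcc B B_fin L' K' RL RK)) as [G [psi [HG [Hpsi Hs]]]].
  apply (rec_of_sat V A G (hcomp psi ph) _ HG (hcomp_hom _ _ ph_hom Hpsi)).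
  intros u v e [x [y [h [Lx [Ky Eu]]]]].
  assert (C : Defs.concat B L' K' (pp v)).
  { apply (Hs (pp u)); auto. exists (pp x), (pp y), (eq_trans (pp_src _) (eq_trans h (pp_tgt _))).
    split; [|split].
    - apply (HL x); auto. apply phi_det. symmetry. apply pre_spec.
    - apply (HK y); auto. apply phi_det. symmetry. apply pre_spec.
    - rewrite Eu. apply pp_mul. }
  destruct C as [y1 [y2 [h2 [L1 [K2 Ev]]]]].
  destruct (pp_split v y1 y2 h2 Ev) as [v1 [v2 [h' [Ev' [E1 E2]]]]].
  exists v1, v2, h'. split; [|split; auto].
  - apply (HL (pre y1)); auto. apply phi_det. rewrite pre_spec; auto.
  - apply (HK (pre y2)); auto. apply phi_det. rewrite pre_spec; auto.
Qed.
End P2.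

Lemma C1_C2 V : pseudovariety V -> concatenation_closed V ->
  forall A, finite_vertex_graph A -> recog_concat_closed V A.
Proof.
  intros HV Hcc A Afv L K HL HK.
  destruct (rec_multi V HV A [L; K]) as [F [phi [HF [Hp Hs]]]].
  { intros M [<-|[<-|[]]]; auto. }
  apply (P2 V HV Hcc A Afv F phi HF Hp).
  - apply Hs; left; auto.
  - apply Hs; right; left; auto.
Qed.


Lemma sig_list2 {X : Type} (P Q : X -> Prop) (l : list X) :
  (forall x, P x -> Q x -> In x l) -> exists ls : list (sig P), forall s, Q (proj1_sig s) -> In s ls.
Proof.
  intro H. destruct (sig_list (fun x => P x /\ Q x) l) as [ls Hls].
  { intros x [Px Qx]; auto. }
  exists (map (fun s => exist P (proj1_sig s) (proj1 (proj2_sig s))) ls).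
  intros [x Px] Qx. apply in_map_iff. exists (exist _ x (conj Px Qx)). split; auto.
  simpl. f_equal. apply proof_irrelevance.
Qed.

Section GenLang.
Variable V : sgd -> Prop.
Hypothesis HV : pseudovariety V.
Hypothesis Hcc : concatenation_closed V.
Variable A : graph.
Hypothesis Afin : finite_graph A.

Definition LenGe (m : nat) : lang A := fun x => m <= length (word A x).

Lemma word_len x : 1 <= length (word A x).
Proof. unfold word; simpl; lia. Qed.

Lemma rec_LenGe m : recognizable V A (LenGe (S m)).
Proof.
  induction m as [|m IH].
  - apply (rec_ext V A (fun _ => True)); [|apply rec_full; auto].
    intro x; split; auto. intros _. apply word_len.
  - apply (rec_ext V A (Defs.concat A (fun _ => True) (LenGe (S m)))); [|apply Hcc; auto; apply rec_full; auto].
    intro x; split.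
    + intros [u [v [h [_ [Hv ->]]]]]. unfold LenGe in *. simpl (smul _ _ _ _).
      rewrite word_mul, length_app. pose proof (word_len u). lia.
    + intro Hx. destruct x as [[e l] H]. unfold LenGe, word in Hx; simpl in Hx.
      destruct l as [|g l]; [simpl in Hx; lia|].
      rewrite (path_cons A e g l H).
      exists (single A e), (exist _ (g, l) (proj2 H)), (proj1 H). split; [auto|split; [|reflexivity]].
      unfold LenGe, word; simpl in *. lia.
Qed.

Lemma rec_hom p q : recognizable V A (fun x => ptgt A x = p /\ psrc A x = q).
Proof.
  apply (rec_of_sat V A _ (hGA A) _ (GA_V V HV A (proj1 Afin)) (hGA_hom A)).
  intros u v e [E1 E2]. simpl in e. injection e; intros; split; congruence.
Qed.

Hypothesis edge_det : forall e e' : gE A, gtgt A e = gtgt A e' -> gsrc A e = gsrc A e' -> e = e'.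

Lemma rec_single e : recognizable V A (fun x => x = single A e).
Proof.
  apply (rec_ext V A (fun x => (~ LenGe 2 x) /\ (ptgt A x = gtgt A e /\ psrc A x = gsrc A e))).
  2: { apply (rec_inter V HV A); [apply rec_compl; apply rec_LenGe|apply rec_hom]. }
  intro x; split.
  - intros [N [E1 E2]]. destruct x as [[e' l] H]. unfold LenGe, word in N; simpl in N.
    destruct l; [|simpl in N; lia].
    unfold ptgt, psrc in *; simpl in *. assert (e' = e) by (apply edge_det; auto). subst.
    apply path_ext; reflexivity.
  - intros ->. unfold LenGe, word; simpl. split; [lia|auto].
Qed.

Lemma rec_sing : forall l e (H : is_path A e l),
  recognizable V A (fun x => x = exist (fun ep => is_path A (fst ep) (snd ep)) (e, l) H).
Proof.
  induction l as [|g l IH]; intros e H.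
  - apply (rec_ext V A (fun x => x = single A e)); [|apply rec_single].
    intro x; split; intros ->; apply path_ext; reflexivity.
  - apply (rec_ext V A (Defs.concat A (fun x => x = single A e)
             (fun x => x = exist (fun ep => is_path A (fst ep) (snd ep)) (g, l) (proj2 H)))).
    2: { apply Hcc; [exact Afin|apply rec_single|apply IH]. }
    intro x; split.
    + intros [u [v [h [-> [-> ->]]]]]. apply path_ext; reflexivity.
    + intros ->. rewrite (path_cons A e g l H).
      exists (single A e), (exist _ (g, l) (proj2 H)), (proj1 H). auto.
Qed.

Lemma short_list M : exists lp : list (pathE A), forall x, length (word A x) <= M -> In x lp.
Proof.
  destruct Afin as [_ [lE HE]].
  destruct (sig_list2 (fun ep : gE A * list (gE A) => is_path A (fst ep) (snd ep))
             (fun ep => length (snd ep) <= M) (list_prod lE (allw (gE A) lE M))) as [ls Hls].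
  { intros [e l] _ Hl. apply in_prod; auto. apply allw_cover; auto. }
  exists ls. intros x Hx. apply Hls. unfold word in Hx. simpl in Hx. lia.
Qed.

Lemma kernel_rec M : exists F (phi : hom (Aplus A) F), V F /\ is_hom phi /\
  forall x y, he phi x = he phi y -> x = y \/ (LenGe (S M) x /\ LenGe (S M) y).
Proof.
  destruct (short_list M) as [lp Hlp].
  destruct (rec_multi V HV A (LenGe (S M) :: map (fun w => fun x => x = w) lp)) as [F [phi [HF [Hp Hs]]]].
  { intros L [<-|HL]; [apply rec_LenGe|].
    apply in_map_iff in HL. destruct HL as [[[e l] H] [<- _]]. apply rec_sing. }
  exists F, phi. split; [auto|split; [auto|]].
  intros x y E.
  destruct (classic (LenGe (S M) x)) as [Lx|Sx].
  - right. split; auto. apply (Hs _ (or_introl eq_refl) x y E Lx).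
  - left. assert (Inx : In x lp) by (apply Hlp; unfold LenGe in Sx; lia).
    symmetry. apply (Hs (fun z => z = x) (or_intror (proj2 (in_map_iff _ _ _) (ex_intro _ x (conj eq_refl Inx)))) x y E).
    reflexivity.
Qed.
End GenLang.


Section P3.
Variable V : sgd -> Prop.
Hypothesis HV : pseudovariety V.
Hypothesis Hcc : concatenation_closed V.
Variable Sg : sgd.
Hypothesis HS : is_sgd Sg.
Hypothesis HSf : finite_sgd Sg.
Variable x0 : sV Sg.
Hypothesis Hone : forall y, y = x0.
Variable z : sE Sg.
Variable n : nat.
Hypothesis Hnil : forall f w, is_prod Sg f n w -> w = z.

Definition osh (s t : sE Sg) : ssrc Sg s = stgt Sg t := eq_trans (Hone _) (eq_sym (Hone _)).
Definition sm (s t : sE Sg) : sE Sg := smul Sg s t (osh s t).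

Lemma sm_assoc a b c : sm (sm a b) c = sm a (sm b c).
Proof. unfold sm. apply smul_assoc; auto. Qed.

Fixpoint prodS (acc : sE Sg) (l : list (sE Sg)) : sE Sg :=
  match l with [] => acc | t :: l => prodS (sm acc t) l end.

Lemma prodS_app acc l1 l2 : prodS acc (l1 ++ l2) = prodS (prodS acc l1) l2.
Proof. revert acc; induction l1; simpl; auto. Qed.

Lemma prodS_mul a s l : sm a (prodS s l) = prodS (sm a s) l.
Proof.
  revert s; induction l as [|t l IH]; intro s; simpl; auto.
  rewrite IH. rewrite sm_assoc. reflexivity.
Qed.

Lemma prodS_isprod : forall l acc m f, is_prod Sg f m acc ->
  (forall j, j < length l -> f (S (m + j)) = nth j l acc) ->
  is_prod Sg f (m + length l) (prodS acc l).
Proof.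
  induction l as [|t l IH]; intros acc m f Hp Hf; simpl.
  - rewrite Nat.add_0_r. auto.
  - assert (Ef : f (S m) = t).
    { specialize (Hf 0). rewrite Nat.add_0_r in Hf. apply Hf. simpl; lia. }
    pose proof (is_prodS Sg f m acc (osh acc (f (S m))) Hp) as H1.
    rewrite Ef in H1.
    replace (m + S (length l)) with (S m + length l) by lia.
    apply IH; auto.
    intros j Hj. replace (S (S m + j)) with (S (m + S j)) by lia.
    rewrite Hf by (simpl; lia). simpl. apply nth_indep. auto.
Qed.

Lemma nil_exact s l : length l = n -> prodS s l = z.
Proof.
  intro Hl. apply (Hnil (fun k => nth k (s :: l) s)).
  rewrite <- Hl. apply (prodS_isprod l s 0).
  - apply is_prod0.
  - intros j _. reflexivity.
Qed.

Lemma repeat_snoc (t : sE Sg) m : repeat t m ++ [t] = t :: repeat t m.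
Proof. induction m; simpl; auto. rewrite IHm. reflexivity. Qed.

Lemma z_absorb t : sm z t = z.
Proof.
  rewrite <- (nil_exact t (repeat t n)) at 1 by apply repeat_length.
  change (sm (prodS t (repeat t n)) t) with (prodS (prodS t (repeat t n)) [t]).
  rewrite <- prodS_app, repeat_snoc. simpl. apply nil_exact. apply repeat_length.
Qed.

Lemma prodS_z l : prodS z l = z.
Proof. induction l; simpl; auto. rewrite z_absorb. auto. Qed.

Lemma nil_len s l : n <= length l -> prodS s l = z.
Proof.
  intro Hl. rewrite <- (firstn_skipn n l). rewrite prodS_app.
  rewrite (nil_exact s (firstn n l)); [apply prodS_z|]. rewrite length_firstn. lia.
Qed.

Definition Bg : graph := Graph (option (sE Sg)) (bool * sE Sg)
  (fun e => if fst e then None else Some (snd e))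
  (fun e => if fst e then Some (snd e) else None).

Lemma Bg_fin : finite_graph Bg.
Proof.
  destruct HSf as [_ [lS HlS]]. split.
  - exists (None :: map Some lS). intros [s|]; [right; apply in_map; auto|left; auto].
  - exists (list_prod [true; false] lS). intros [b s]. apply in_prod; auto.
    destruct b; simpl; auto.
Qed.

Lemma Bg_edge_det (e e' : gE Bg) : gtgt Bg e = gtgt Bg e' -> gsrc Bg e = gsrc Bg e' -> e = e'.
Proof. destruct e as [[|] s], e' as [[|] s']; simpl; intros; congruence. Qed.

Definition sl (l : list (bool * sE Sg)) : list (sE Sg) := map snd (filter (fun e => negb (fst e)) l).

Lemma alt : forall l e, is_path Bg e l ->
  (fst e = false -> length (e :: l) <= 2 * length (sl (e :: l))) /\
  (fst e = true -> length (e :: l) <= 2 * length (sl (e :: l)) + 1).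
Proof.
  induction l as [|g l IH]; intros [b s] H.
  - split; intro E; simpl in E; subst; simpl; lia.
  - destruct H as [H1 H2]. destruct (IH g H2) as [IH1 IH2]. destruct g as [b' s'].
    split; intro E; simpl in E; subst b; simpl in H1.
    + destruct b'; simpl in H1; [|discriminate]. specialize (IH2 eq_refl).
      unfold sl in *; simpl in *. lia.
    + destruct b'; simpl in H1; [discriminate|]. specialize (IH1 eq_refl).
      unfold sl in *; simpl in *. lia.
Qed.

Definition eval (d : pathE Bg) : sE Sg :=
  match sl (word Bg d) with [] => snd (fst (proj1_sig d)) | s :: l => prodS s l end.

Definition isloop (d : pathE Bg) := ptgt Bg d = None /\ psrc Bg d = None.

Lemma loop_head d : isloop d -> fst (fst (proj1_sig d)) = false.
Proof.
  intros [H _]. unfold ptgt in H. destruct d as [[[b s] l] Hd]; simpl in *.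
  destruct b; simpl in H; [discriminate|auto].
Qed.

Lemma loop_sl d : isloop d -> exists s l, sl (word Bg d) = s :: l /\
  length (word Bg d) <= 2 * length (s :: l).
Proof.
  intro H. pose proof (loop_head d H) as Hh.
  destruct d as [[[b s] l] Hd]; simpl in *. subst b.
  exists s, (sl l). split; [reflexivity|].
  destruct (alt l (false, s) Hd) as [A1 _]. apply A1; auto.
Qed.

Lemma eval_long d : isloop d -> 2 * n + 2 <= length (word Bg d) -> eval d = z.
Proof.
  intros H Hl. destruct (loop_sl d H) as [s [l [E Hle]]].
  unfold eval. rewrite E. apply nil_len. change (length (s :: l)) with (S (length l)) in Hle. lia.
Qed.

Lemma sl_app l1 l2 : sl (l1 ++ l2) = sl l1 ++ sl l2.
Proof. unfold sl. rewrite filter_app, map_app. reflexivity. Qed.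

Lemma eval_mul d1 d2 h : isloop d1 -> isloop d2 -> eval (pmul Bg d1 d2 h) = sm (eval d1) (eval d2).
Proof.
  intros H1 H2. destruct (loop_sl d1 H1) as [s1 [l1 [E1 _]]].
  destruct (loop_sl d2 H2) as [s2 [l2 [E2 _]]].
  unfold eval. rewrite word_mul, sl_app, E1, E2. simpl.
  rewrite prodS_app. simpl. rewrite prodS_mul. reflexivity.
Qed.

Section WithK.
Variable k : fidx V Bg.
Hypothesis Hk : vinj V Bg k.
Hypothesis Hker : forall x y, he (fmap k) x = he (fmap k) y ->
  x = y \/ (LenGe Bg (S (2 * n + 1)) x /\ LenGe Bg (S (2 * n + 1)) y).

Let I := projT1 k.
Let HI : is_sgd I := V_sgd V HV _ (fidx_V V Bg k).
Let Hfk : is_hom (fmap k) := fidx_hom V Bg k.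
Let v0 : sV I := hv (fmap k) None.

Lemma ker_eval d1 d2 : isloop d1 -> isloop d2 -> he (fmap k) d1 = he (fmap k) d2 -> eval d1 = eval d2.
Proof.
  intros H1 H2 E. destruct (Hker d1 d2 E) as [->|[L1 L2]]; auto.
  unfold LenGe in *. rewrite !eval_long; auto; lia.
Qed.

Definition UE := {e : sE I | ssrc I e = v0 /\ stgt I e = v0}.

Lemma um_pf (e1 e2 : UE) :
  ssrc I (proj1_sig e1) = stgt I (proj1_sig e2).
Proof. rewrite (proj1 (proj2_sig e1)), (proj2 (proj2_sig e2)). reflexivity. Qed.

Lemma um_pf2 (e1 e2 : UE) :
  ssrc I (smul I (proj1_sig e1) (proj1_sig e2) (um_pf e1 e2)) = v0 /\
  stgt I (smul I (proj1_sig e1) (proj1_sig e2) (um_pf e1 e2)) = v0.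
Proof.
  rewrite smul_src, smul_tgt; auto. split; [apply (proj1 (proj2_sig e2))|apply (proj2 (proj2_sig e1))].
Qed.

Definition Um (e1 e2 : UE) (_ : tt = tt) : UE := exist _ _ (um_pf2 e1 e2).

Definition Usg : sgd := Sgd unit UE (fun _ => tt) (fun _ => tt) Um.

Lemma UE_ext (x y : UE) : proj1_sig x = proj1_sig y -> x = y.
Proof. destruct x, y; simpl; intros; subst; f_equal; apply proof_irrelevance. Qed.

Lemma Usg_sgd : is_sgd Usg.
Proof.
  split; [|split; [|split]]; simpl; intros; try reflexivity.
  apply UE_ext; simpl. apply smul_assoc; auto.
Qed.

Lemma Usg_fin : finite_sgd Usg.
Proof.
  destruct (V_fin V HV _ (fidx_V V Bg k)) as [_ [le He]]. split.
  - exists [tt]. intros []; left; auto.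
  - apply (sig_list _ le). auto.
Qed.

Definition fU : hom Usg I := Hom Usg I (fun _ => v0) (fun e => proj1_sig e).
Lemma fU_hom : is_hom fU.
Proof.
  split; [|split]; simpl.
  - intro e; apply (proj1 (proj2_sig e)).
  - intro e; apply (proj2 (proj2_sig e)).
  - intros; apply smul_pi; auto.
Qed.

Lemma loopd_ex (e : UE) : exists d, he (fmap k) d = proj1_sig e.
Proof. apply (proj2 (fidx_onto V Bg k)). Qed.
Definition loopd (e : UE) : pathE Bg := proj1_sig (constructive_indefinite_description _ (loopd_ex e)).
Lemma loopd_spec e : he (fmap k) (loopd e) = proj1_sig e.
Proof. unfold loopd. destruct (constructive_indefinite_description _ _); auto. Qed.

Lemma isloop_of d : ssrc I (he (fmap k) d) = v0 -> stgt I (he (fmap k) d) = v0 -> isloop d.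
Proof.
  intros H1 H2. rewrite (hom_src _ Hfk) in H1. rewrite (hom_tgt _ Hfk) in H2.
  split; apply Hk; auto.
Qed.

Lemma loopd_loop e : isloop (loopd e).
Proof.
  apply isloop_of; rewrite loopd_spec; [apply (proj1 (proj2_sig e))|apply (proj2 (proj2_sig e))].
Qed.

Definition gU : hom Usg Sg := Hom Usg Sg (fun _ => x0) (fun e => eval (loopd e)).

Lemma gU_hom : is_hom gU.
Proof.
  split; [|split]; simpl.
  - intro; apply Hone.
  - intro; apply Hone.
  - intros e1 e2 h h'.
    assert (hd : psrc Bg (loopd e1) = ptgt Bg (loopd e2)).
    { rewrite (proj2 (loopd_loop e1)), (proj1 (loopd_loop e2)). reflexivity. }
    assert (Hl : isloop (pmul Bg (loopd e1) (loopd e2) hd)).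
    { split; [apply (proj1 (loopd_loop e1))|].
      transitivity (psrc Bg (loopd e2)); [apply (smul_src _ (Aplus_sgd Bg))|apply (proj2 (loopd_loop e2))]. }
    rewrite (ker_eval _ (pmul Bg (loopd e1) (loopd e2) hd) (loopd_loop _) Hl).
    + rewrite eval_mul by apply loopd_loop. unfold sm. apply smul_pi; auto.
    + rewrite loopd_spec. simpl.
      symmetry. etransitivity; [apply (hom_mul _ Hfk (loopd e1 : sE (Aplus Bg)) (loopd e2) hd
                                  (hom_mul_proof _ Hfk _ _ hd))|].
      apply smul_congr; auto; apply loopd_spec.
Qed.

Definition dpath (s : sE Sg) : pathE Bg :=
  exist (fun ep => is_path Bg (fst ep) (snd ep)) ((false, s), [(true, s)]) (conj eq_refl Logic.I).

Lemma dpath_ok s : ssrc I (he (fmap k) (dpath s)) = v0 /\ stgt I (he (fmap k) (dpath s)) = v0.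
Proof. rewrite (hom_src _ Hfk), (hom_tgt _ Hfk). split; reflexivity. Qed.

Lemma S_div : divides Sg I.
Proof.
  exists Usg, fU, gU. split; [apply Usg_sgd|split; [apply fU_hom|split; [apply gU_hom|split]]].
  - intros e e' _ _ E. apply UE_ext; auto.
  - split; [|split].
    + intros [] [] _; reflexivity.
    + intro y. exists tt. simpl. symmetry; apply Hone.
    + intro s. exists (exist (fun e => ssrc I e = v0 /\ stgt I e = v0) _ (dpath_ok s) : UE). simpl.
      transitivity (eval (dpath s)); [|reflexivity].
      apply ker_eval; [apply loopd_loop|split; reflexivity|].
      rewrite loopd_spec. reflexivity.
Qed.
End WithK.

Lemma P3_main : V Sg.
Proof.
  destruct (kernel_rec V HV Hcc Bg Bg_fin Bg_edge_det (2 * n + 1)) as [F [phi [HF [Hp Hker]]]].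
  destruct (onto_idx V HV Bg (proj1 Bg_fin) F phi HF Hp) as [k [Hk Hkk]].
  apply (V_div V HV Sg (projT1 k) (fidx_V V Bg k) HS HSf).
  apply (S_div k Hk). intros x y E. apply Hker. apply Hkk; auto.
Qed.
End P3.

Lemma C1_N V : pseudovariety V -> concatenation_closed V -> containsN V.
Proof.
  intros HV Hcc Sg HS HSf [x0 Hone] [z [n Hnil]].
  apply (P3_main V HV Hcc Sg HS HSf x0 Hone z n Hnil).
Qed.


Theorem mainTheorem2 (V : sgd -> Prop) :
  pseudovariety V ->
  (concatenation_closed V <->
     (forall A : graph, finite_vertex_graph A -> recog_concat_closed V A)) /\
  (concatenation_closed V <->
     (containsN V /\
      forall A : graph, finite_vertex_graph A -> multiplication_open V A)) /\
  (concatenation_closed V <->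
     (containsN V /\
      forall A : graph, finite_graph A -> multiplication_open V A)).
Proof.
  intro HV.
  assert (C12 : concatenation_closed V -> forall A, finite_vertex_graph A -> recog_concat_closed V A)
    by (apply C1_C2; auto).
  assert (C13 : concatenation_closed V -> containsN V /\
      forall A : graph, finite_vertex_graph A -> multiplication_open V A).
  { intro H. split; [apply C1_N; auto|]. intros A Afv. apply (P4_open V HV A Afv). apply C12; auto. }
  assert (C41 : containsN V /\ (forall A : graph, finite_graph A -> multiplication_open V A) ->
      concatenation_closed V).
  { intros [HN Hop] A Afin L K HL HK. apply (P5 V HV A Afin HN (Hop A Afin) L K HL HK). }
  split; [|split].
  - split; auto. intros H A Afin. apply H. apply (proj1 Afin).
  - split; auto. intros [HN Hop]. apply C41. split; auto. intros A Afin. apply Hop. apply (proj1 Afin).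
  - split; auto. intro H. destruct (C13 H) as [HN Hop]. split; auto. intros A Afin. apply Hop. apply (proj1 Afin).
Qed.
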